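(* Let $\Gamma$ be a pointclass defined for Polish spaces which is closed under continuous preimages. Let $x\in S^1$, $\overline{x}=(x,x,\ldots)\in T^\infty=\prod_{\omega}S^1$, and identify $\pi_1(T^\infty,\overline{x})$ with $\prod_\omega\mathbb{Z}$ via $\pi_1(T^\infty,\overline x)\cong\prod_\omega\pi_1(S^1,x)$ and a fixed generator of $\pi_1(S^1,x)\cong\mathbb{Z}$. Then a subgroup $G\le\prod_\omega\mathbb{Z}$ is in $\Gamma$ as a subset of the Polish group $\prod_\omega\mathbb{Z}$ (product of discrete groups) if and only if $G$ is $\Gamma$ as a subgroup of $\pi_1(T^\infty,\overline{x})$.
   Context: For a path connected Polish space $(X,d)$ and $x\in X$, $L_x$ is the Polish space of loops at $x$ with metric $\sup_s d(l_0(s),l_1(s))$. A subgroup $G\le\pi_1(X,x)$ is $\Gamma$ if the set of loops in $L_x$ whose homotopy classes lie in $G$ belongs to $\Gamma$ in $L_x$. *)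

(* Defs.v *)
From Stdlib Require Import Reals ZArith.
From Coquelicot Require Import Coquelicot.
Open Scope R_scope.

Definition is_metric {T : Type} (d : T -> T -> R) : Prop :=
  (forall x y, 0 <= d x y) /\
  (forall x y, d x y = 0 <-> x = y) /\
  (forall x y, d x y = d y x) /\
  (forall x y z, d x z <= d x y + d y z).

Definition metric_complete {T : Type} (d : T -> T -> R) : Prop :=
  forall u : nat -> T,
    (forall eps, 0 < eps -> exists N, forall m n, (N <= m)%nat -> (N <= n)%nat ->
        d (u m) (u n) < eps) ->
    exists l, forall eps, 0 < eps -> exists N, forall n, (N <= n)%nat -> d (u n) l < eps.

Definition metric_separable {T : Type} (d : T -> T -> R) : Prop :=
  (forall x : T, False) \/
  exists e : nat -> T, forall x eps, 0 < eps -> exists n, d x (e n) < eps.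

Definition polish {T : Type} (d : T -> T -> R) : Prop :=
  is_metric d /\ metric_complete d /\ metric_separable d.

Definition metric_continuous {X Y : Type} (dX : X -> X -> R) (dY : Y -> Y -> R)
  (f : X -> Y) : Prop :=
  forall x eps, 0 < eps -> exists delta, 0 < delta /\
    forall x', dX x x' < delta -> dY (f x) (f x') < eps.

Definition pointclass := forall (T : Type), (T -> T -> R) -> (T -> Prop) -> Prop.

Definition closed_cont_preimages (Gamma : pointclass) : Prop :=
  forall (X Y : Type) (dX : X -> X -> R) (dY : Y -> Y -> R),
    polish dX -> polish dY ->
    forall f : X -> Y, metric_continuous dX dY f ->
    forall A : Y -> Prop, Gamma Y dY A -> Gamma X dX (fun x => A (f x)).

Definition on_circle (p : R * R) : Prop := fst p ^ 2 + snd p ^ 2 = 1.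

Definition deucl (p q : R * R) : R :=
  sqrt ((fst p - fst q) ^ 2 + (snd p - snd q) ^ 2).

Definition in_torus (y : nat -> R * R) : Prop := forall k, on_circle (y k).

(* A compatible complete metric for the product topology on T^oo. *)
Definition dT (y z : nat -> R * R) : R :=
  Series (fun k => (/ 2) ^ k * Rmin 1 (deucl (y k) (z k))).

Definition const_seq (x : R * R) : nat -> R * R := fun _ => x.

Definition unit_int (s : R) : Prop := 0 <= s <= 1.

(* Loops are functions R -> T^oo; they are normalized to equal the base point
   outside [0,1] so that the sup metric below is a genuine metric. *)
Definition is_loop (xb : nat -> R * R) (l : R -> nat -> R * R) : Prop :=
  (forall s, in_torus (l s)) /\
  (forall s, ~ unit_int s -> l s = xb) /\
  l 0 = xb /\ l 1 = xb /\
  (forall s eps, unit_int s -> 0 < eps -> exists delta, 0 < delta /\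
     forall s', unit_int s' -> Rabs (s - s') < delta -> dT (l s) (l s') < eps).

Definition loop_space (xb : nat -> R * R) := { l : R -> nat -> R * R | is_loop xb l }.

Definition dL {xb : nat -> R * R} (l0 l1 : loop_space xb) : R :=
  real (Lub_Rbar (fun r => exists s, unit_int s /\
          r = dT (proj1_sig l0 s) (proj1_sig l1 s))).

Definition loop_homotopic (xb : nat -> R * R) (l0 l1 : R -> nat -> R * R) : Prop :=
  exists H : R -> R -> nat -> R * R,
    (forall s t, unit_int s -> unit_int t -> in_torus (H s t)) /\
    (forall s, unit_int s -> H s 0 = l0 s) /\
    (forall s, unit_int s -> H s 1 = l1 s) /\
    (forall t, unit_int t -> H 0 t = xb /\ H 1 t = xb) /\
    (forall s t eps, unit_int s -> unit_int t -> 0 < eps -> exists delta, 0 < delta /\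
       forall s' t', unit_int s' -> unit_int t' ->
         Rabs (s - s') < delta -> Rabs (t - t') < delta ->
         dT (H s t) (H s' t') < eps).

Definition rot (x : R * R) (theta : R) : R * R :=
  (fst x * cos theta - snd x * sin theta, fst x * sin theta + snd x * cos theta).

(* The fixed generator of pi_1(S^1,x) is the class of s |-> x e^{2 pi i s};
   under pi_1(T^oo,xbar) = prod_omega pi_1(S^1,x) = prod_omega Z the element
   n : nat -> Z corresponds to the class of the loop below. *)
Definition wind_loop (x : R * R) (n : nat -> Z) : R -> nat -> R * R :=
  fun s k => rot x (2 * PI * IZR (n k) * s).

Definition loops_in (x : R * R) (G : (nat -> Z) -> Prop)
  : loop_space (const_seq x) -> Prop :=
  fun l => exists n, G n /\
    loop_homotopic (const_seq x) (proj1_sig l) (wind_loop x n).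

Definition dZ (a b : nat -> Z) : R :=
  Series (fun k => (/ 2) ^ k * (if Z.eq_dec (a k) (b k) then 0 else 1)).

Definition is_subgroup (G : (nat -> Z) -> Prop) : Prop :=
  G (fun _ => 0%Z) /\ (forall a b, G a -> G b -> G (fun k => (a k - b k)%Z)).

(* Main.v *)
Require Import Defs.
From Stdlib Require Import Reals ZArith.
From Coquelicot Require Import Coquelicot.
From Stdlib Require Import Lra Lia FunctionalExtensionality PropExtensionality ClassicalEpsilon Classical ProofIrrelevance Cantor.
Open Scope R_scope.

Lemma Rabs_le_iff a b : Rabs a <= b <-> -b <= a <= b.
Proof. unfold Rabs; destruct Rcase_abs; split; intros; lra. Qed.
Lemma Rabs_lt_iff a b : Rabs a < b <-> -b < a < b.
Proof. unfold Rabs; destruct Rcase_abs; split; intros; lra. Qed.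

Definition S2 (c : nat -> R) := Series (fun k => (/2)^k * c k).

Lemma half_pow_pos k : 0 < (/2)^k.
Proof. apply pow_lt; lra. Qed.

Lemma ex_S2 c B : (forall k, 0 <= c k <= B) -> ex_series (fun k => (/2)^k * c k).
Proof.
  intros Hc. apply (@ex_series_le R_AbsRing R_CompleteNormedModule _ (fun k => B * (/2)^k)).
  - intros n. change (norm ((/2)^n * c n)) with (Rabs ((/2)^n * c n)).
    rewrite Rabs_pos_eq. 2:{ apply Rmult_le_pos. left; apply half_pow_pos. apply Hc. }
    rewrite Rmult_comm. apply Rmult_le_compat_r. left; apply half_pow_pos. apply Hc.
  - apply (@ex_series_scal_l R_AbsRing R_NormedModule B (fun k => (/2)^k)). apply ex_series_geom. rewrite Rabs_pos_eq; lra.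
Qed.

Lemma Series_nonneg a : (forall n, 0 <= a n) -> ex_series a -> 0 <= Series a.
Proof.
  intros H1 H2.
  assert (E : Series (fun n => 0 * a n) = 0). { rewrite Series_scal_l; ring. }
  rewrite <- E. apply Series_le; auto. intros n; split; [lra|]. rewrite Rmult_0_l; auto.
Qed.

Lemma sum_f_R0_nonneg a k : (forall n, 0 <= a n) -> 0 <= sum_f_R0 a k.
Proof. intros H; induction k; simpl; [apply H|]. specialize (H (S k)); lra. Qed.

Lemma sum_f_R0_ge a k : (forall n, 0 <= a n) -> a k <= sum_f_R0 a k.
Proof.
  intros H. destruct k; simpl. lra.
  pose proof (sum_f_R0_nonneg a k H). lra.
Qed.

Lemma S2_ge c B k : (forall k, 0 <= c k <= B) -> (/2)^k * c k <= S2 c.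
Proof.
  intros Hc. unfold S2.
  assert (Hnn : forall n, 0 <= (/2)^n * c n).
  { intros n; apply Rmult_le_pos; [left; apply half_pow_pos | apply Hc]. }
  rewrite (Series_incr_n _ (S k)); [| lia | apply (ex_S2 c B Hc)].
  simpl Init.Nat.pred.
  pose proof (sum_f_R0_ge (fun k => (/2)^k * c k) k Hnn).
  assert (0 <= Series (fun k0 => (/2)^(S k + k0) * c (S k + k0)%nat)).
  { apply Series_nonneg. intros; apply Hnn.
    apply (ex_series_incr_n (fun k => (/2)^k * c k) (S k)). apply (ex_S2 c B Hc). }
  lra.
Qed.

Lemma S2_nonneg c B : (forall k, 0 <= c k <= B) -> 0 <= S2 c.
Proof.
  intros Hc. apply Series_nonneg. intros n; apply Rmult_le_pos; [left; apply half_pow_pos | apply Hc].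
  apply (ex_S2 c B Hc).
Qed.

Lemma Series_half : Series (pow (/2)) = 2.
Proof. rewrite Series_geom. field. rewrite Rabs_pos_eq; lra. Qed.

Lemma S2_mono c c' B : (forall k, 0 <= c k <= c' k) -> (forall k, c' k <= B) -> S2 c <= S2 c'.
Proof.
  intros H1 H2. apply Series_le.
  - intros n; pose proof (half_pow_pos n); specialize (H1 n); split.
    apply Rmult_le_pos; lra. apply Rmult_le_compat_l; lra.
  - apply (ex_S2 c' B). intros k; specialize (H1 k); specialize (H2 k); lra.
Qed.

Lemma S2_add c c' B : (forall k, 0 <= c k <= B) -> (forall k, 0 <= c' k <= B) ->
  S2 (fun k => c k + c' k) = S2 c + S2 c'.
Proof.
  intros H1 H2. unfold S2. rewrite <- Series_plus.
  apply Series_ext. intros; ring. apply (ex_S2 c B H1). apply (ex_S2 c' B H2).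
Qed.

Lemma S2_bound c K d : (forall k, 0 <= c k <= 1) -> 0 <= d -> (forall k, (k < K)%nat -> c k <= d) ->
  S2 c <= 2 * d + 2 * (/2)^K.
Proof.
  intros Hc Hd HK.
  set (b := fun n => (/2)^n * d + (if Nat.ltb n K then 0 else (/2)^n)).
  assert (Eb1 : ex_series (fun n => (/2)^n * d)).
  { apply (ex_S2 (fun _ => d) d). intros; lra. }
  assert (Eb2 : ex_series (fun n => if Nat.ltb n K then 0 else (/2)^n)).
  { apply (@ex_series_le R_AbsRing R_CompleteNormedModule _ (fun k => 1 * (/2)^k)).
    - intros n. change (norm (if Nat.ltb n K then 0 else (/2)^n)) with (Rabs (if Nat.ltb n K then 0 else (/2)^n)).
      pose proof (half_pow_pos n). destruct (Nat.ltb n K); rewrite Rabs_pos_eq; lra.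
    - apply (@ex_series_scal_l R_AbsRing R_NormedModule 1 (fun k => (/2)^k)). apply ex_series_geom.
      rewrite Rabs_pos_eq; lra. }
  apply Rle_trans with (Series b).
  - apply Series_le.
    + intros n; pose proof (half_pow_pos n); specialize (Hc n); unfold b; split.
      apply Rmult_le_pos; lra.
      destruct (Nat.ltb n K) eqn:E.
      * apply Nat.ltb_lt in E. specialize (HK n E). rewrite Rplus_0_r. apply Rmult_le_compat_l; lra.
      * assert ((/2)^n * c n <= (/2)^n). { rewrite <- (Rmult_1_r ((/2)^n)) at 2. apply Rmult_le_compat_l; lra. }
        assert (0 <= (/2)^n * d) by (apply Rmult_le_pos; lra). lra.
    + unfold b. apply (@ex_series_plus R_AbsRing R_NormedModule); auto.
  - unfold b. rewrite Series_plus; auto.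
    assert (E1 : Series (fun n => (/2)^n * d) = 2 * d).
    { rewrite (Series_ext _ (fun n => d * (/2)^n)). rewrite Series_scal_l, Series_half; ring. intros; ring. }
    assert (E2 : Series (fun n => if Nat.ltb n K then 0 else (/2)^n) = 2 * (/2)^K).
    { rewrite (Series_incr_n_aux _ K).
      - rewrite (Series_ext _ (fun n => (/2)^K * (/2)^n)). rewrite Series_scal_l, Series_half; ring.
        intros n. destruct (Nat.ltb (K + n) K) eqn:E. apply Nat.ltb_lt in E; lia. rewrite pow_add; ring.
      - intros k Hk. apply Nat.ltb_lt in Hk. rewrite Hk. reflexivity. }
    lra.
Qed.

Lemma half_pow_small eps : 0 < eps -> exists K, 2 * (/2)^K < eps.
Proof.
  intros He. destruct (pow_lt_1_zero (/2)) with (y := eps / 2) as [K HK].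
  rewrite Rabs_pos_eq; lra. lra.
  exists K. specialize (HK K (le_n K)). rewrite Rabs_pos_eq in HK. lra. left; apply half_pow_pos.
Qed.

Lemma half_pow_le1 n : (/2)^n <= 1.
Proof. induction n; simpl. lra. pose proof (half_pow_pos n). nra. Qed.

Lemma half_pow_le k K : (k <= K)%nat -> (/2)^K <= (/2)^k.
Proof.
  intros H. replace K with (k + (K - k))%nat by lia. rewrite pow_add.
  pose proof (half_pow_pos k).
  assert ((/2)^(K-k) <= 1). { apply half_pow_le1. }
  pose proof (half_pow_pos (K-k)).
  nra.
Qed.

Definition dot (p q : R * R) := fst p * fst q + snd p * snd q.
Definition cross (p q : R * R) := fst p * snd q - snd p * fst q.
Definition ang (p q : R * R) := atan (cross p q / dot p q).

Lemma deucl_nonneg p q : 0 <= deucl p q.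
Proof. apply sqrt_pos. Qed.

Lemma deucl_sym p q : deucl p q = deucl q p.
Proof. unfold deucl. f_equal. ring. Qed.

Lemma deucl_self p : deucl p p = 0.
Proof. unfold deucl. replace ((fst p - fst p) ^ 2 + (snd p - snd p) ^ 2) with 0 by ring. apply sqrt_0. Qed.

Lemma deucl_eq0 p q : deucl p q = 0 -> p = q.
Proof.
  unfold deucl; intros H. apply sqrt_eq_0 in H;
  [| pose proof (pow2_ge_0 (fst p - fst q)); pose proof (pow2_ge_0 (snd p - snd q)); lra].
  destruct p as [p1 p2], q as [q1 q2]; simpl in *.
  pose proof (pow2_ge_0 (p1 - q1)); pose proof (pow2_ge_0 (p2 - q2)).
  assert (A1 : Rsqr (p1 - q1) = 0) by (unfold Rsqr; simpl in *; nra).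
  assert (A2 : Rsqr (p2 - q2) = 0) by (unfold Rsqr; simpl in *; nra).
  apply Rsqr_0_uniq in A1, A2. f_equal; lra.
Qed.

Lemma sqrt_le_sqrt' a b : 0 <= a -> a <= b -> sqrt a <= sqrt b.
Proof. intros; apply sqrt_le_1_alt; auto. Qed.

Lemma deucl_fst p q : Rabs (fst p - fst q) <= deucl p q.
Proof.
  unfold deucl. rewrite <- sqrt_Rsqr_abs. apply sqrt_le_sqrt'. apply Rle_0_sqr.
  unfold Rsqr. pose proof (pow2_ge_0 (snd p - snd q)). simpl; lra.
Qed.

Lemma deucl_snd p q : Rabs (snd p - snd q) <= deucl p q.
Proof.
  unfold deucl. rewrite <- sqrt_Rsqr_abs. apply sqrt_le_sqrt'. apply Rle_0_sqr.
  unfold Rsqr. pose proof (pow2_ge_0 (fst p - fst q)). simpl; lra.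
Qed.

Lemma sqrt_le_of_sq a b : 0 <= a -> 0 <= b -> a <= b * b -> sqrt a <= b.
Proof.
  intros Ha Hb H. rewrite <- (sqrt_square b Hb). apply sqrt_le_sqrt'; auto.
Qed.

Lemma deucl_le_sum p q : deucl p q <= Rabs (fst p - fst q) + Rabs (snd p - snd q).
Proof.
  unfold deucl. set (a := fst p - fst q); set (b := snd p - snd q).
  pose proof (Rabs_pos a); pose proof (Rabs_pos b).
  assert (E1 : a^2 = Rabs a * Rabs a). { rewrite <- Rabs_mult. rewrite Rabs_pos_eq; [ring| nra]. }
  assert (E2 : b^2 = Rabs b * Rabs b). { rewrite <- Rabs_mult. rewrite Rabs_pos_eq; [ring| nra]. }
  rewrite E1, E2. apply sqrt_le_of_sq; nra.
Qed.

Lemma deucl_tri p q r : deucl p r <= deucl p q + deucl q r.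
Proof.
  unfold deucl.
  set (a := fst p - fst q); set (b := snd p - snd q); set (c := fst q - fst r); set (d := snd q - snd r).
  replace (fst p - fst r) with (a + c) by (unfold a, c; ring).
  replace (snd p - snd r) with (b + d) by (unfold b, d; ring).
  pose proof (sqrt_pos (a^2+b^2)); pose proof (sqrt_pos (c^2+d^2)).
  pose proof (pow2_ge_0 a); pose proof (pow2_ge_0 b); pose proof (pow2_ge_0 c); pose proof (pow2_ge_0 d).
  pose proof (pow2_ge_0 (a+c)); pose proof (pow2_ge_0 (b+d)).
  apply sqrt_le_of_sq. lra. lra.
  assert (Hs1 : sqrt (a^2+b^2) * sqrt (a^2+b^2) = a^2+b^2) by (apply sqrt_sqrt; lra).
  assert (Hs2 : sqrt (c^2+d^2) * sqrt (c^2+d^2) = c^2+d^2) by (apply sqrt_sqrt; lra).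
  assert (HCS : a*c + b*d <= sqrt (a^2+b^2) * sqrt (c^2+d^2)).
  { rewrite <- sqrt_mult by lra.
    destruct (Rle_dec (a*c+b*d) 0). pose proof (sqrt_pos ((a^2+b^2)*(c^2+d^2))); lra.
    rewrite <- (sqrt_square (a*c+b*d)) by lra. apply sqrt_le_sqrt'. nra.
    assert (E: (a^2+b^2)*(c^2+d^2) - (a*c+b*d)*(a*c+b*d) = (a*d-b*c)^2) by ring.
    pose proof (pow2_ge_0 (a*d-b*c)). lra. }
  nra.
Qed.

Lemma deucl_circle p q : on_circle p -> on_circle q -> deucl p q * deucl p q = 2 - 2 * dot p q.
Proof.
  unfold on_circle, deucl, dot; intros Hp Hq.
  pose proof (pow2_ge_0 (fst p - fst q)); pose proof (pow2_ge_0 (snd p - snd q)).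
  rewrite sqrt_sqrt by lra.
  transitivity ((fst p ^ 2 + snd p ^ 2) + (fst q ^ 2 + snd q ^ 2) - 2 * (fst p * fst q + snd p * snd q)).
  ring. rewrite Hp, Hq; ring.
Qed.

Lemma dot_close p q : on_circle p -> on_circle q -> deucl p q < 1 -> 1/2 < dot p q.
Proof.
  intros Hp Hq H. pose proof (deucl_circle p q Hp Hq). pose proof (deucl_nonneg p q). nra.
Qed.

Lemma rot_circle p a : on_circle p -> on_circle (rot p a).
Proof.
  unfold on_circle, rot; simpl; intros H. pose proof (sin2_cos2 a). unfold Rsqr in *. nra.
Qed.

Lemma rot_add p a b : rot (rot p a) b = rot p (a + b).
Proof. unfold rot; simpl. rewrite cos_plus, sin_plus. f_equal; ring. Qed.

Lemma rot_0 p : rot p 0 = p.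
Proof. unfold rot. rewrite cos_0, sin_0. destruct p; simpl; f_equal; ring. Qed.

Lemma cos_sin_2PIZ k : cos (2 * PI * IZR k) = 1 /\ sin (2 * PI * IZR k) = 0.
Proof.
  assert (Hs : sin (PI * IZR k) = 0). { apply sin_eq_0_1. exists k; ring. }
  split.
  - replace (2 * PI * IZR k) with (2 * (PI * IZR k)) by ring. rewrite cos_2a_sin, Hs; ring.
  - apply sin_eq_0_1. exists (2 * k)%Z. rewrite mult_IZR. ring.
Qed.

Lemma rot_2PIZ p k : rot p (2 * PI * IZR k) = p.
Proof.
  destruct (cos_sin_2PIZ k) as [H1 H2]. unfold rot. rewrite H1, H2. destruct p; simpl; f_equal; ring.
Qed.

Lemma dot_rot p a b : on_circle p -> dot (rot p a) (rot p b) = cos (a - b).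
Proof.
  unfold on_circle, dot, rot; intros H; simpl. rewrite cos_minus.
  transitivity ((cos a * cos b + sin a * sin b) * (fst p ^ 2 + snd p ^ 2)). ring. rewrite H; ring.
Qed.

Lemma cross_rot p a b : on_circle p -> cross (rot p a) (rot p b) = sin (b - a).
Proof.
  unfold on_circle, cross, rot; intros H; simpl. rewrite sin_minus.
  transitivity ((sin b * cos a - cos b * sin a) * (fst p ^ 2 + snd p ^ 2)). ring. rewrite H; ring.
Qed.

Lemma dot_cross_sq p q : on_circle p -> on_circle q -> dot p q ^ 2 + cross p q ^ 2 = 1.
Proof.
  unfold on_circle, dot, cross; intros Hp Hq.
  transitivity ((fst p ^ 2 + snd p ^ 2) * (fst q ^ 2 + snd q ^ 2)). ring. rewrite Hp, Hq; ring.
Qed.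

Lemma rot_ang p q : on_circle p -> on_circle q -> 0 < dot p q -> rot p (ang p q) = q.
Proof.
  intros Hp Hq Hd. pose proof (dot_cross_sq p q Hp Hq) as E.
  set (u := cross p q / dot p q).
  assert (Hsq : sqrt (1 + u²) = / dot p q).
  { assert (E2 : 1 + u² = / dot p q * / dot p q).
    { unfold u, Rsqr. field_simplify_eq. 2: lra. simpl in E |- *. lra. }
    rewrite E2. apply sqrt_square. left; apply Rinv_0_lt_compat; auto. }
  assert (Hc : cos (ang p q) = dot p q).
  { unfold ang. fold u. rewrite cos_atan, Hsq. field. lra. }
  assert (Hs : sin (ang p q) = cross p q).
  { unfold ang. fold u. rewrite sin_atan, Hsq. unfold u. field. lra. }
  unfold rot. rewrite Hc, Hs. unfold on_circle, dot, cross in *. destruct p as [p1 p2], q as [q1 q2]; simpl in *.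
  f_equal; nra.
Qed.

Lemma ang_self p : ang p p = 0.
Proof.
  unfold ang, cross. replace (fst p * snd p - snd p * fst p) with 0 by ring. unfold Rdiv.
  rewrite Rmult_0_l. apply atan_0.
Qed.

Lemma rot_eq_2PI p a b : on_circle p -> rot p a = rot p b -> exists k, a - b = 2 * PI * IZR k.
Proof.
  intros Hp E.
  assert (C : cos (a - b) = 1).
  { rewrite <- dot_rot with (p := p) by auto. rewrite E. rewrite dot_rot by auto.
    replace (b - b) with 0 by ring. apply cos_0. }
  assert (Hs : sin ((a - b) / 2) = 0).
  { replace (a - b) with (2 * ((a - b) / 2)) in C by field. rewrite cos_2a_sin in C. nra. }
  apply sin_eq_0_0 in Hs. destruct Hs as [k Hk]. exists k. lra.
Qed.

Lemma Rabs_sin_le y : Rabs (sin y) <= Rabs y.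
Proof.
  assert (Hpos : forall y, 0 < y -> Rabs (sin y) <= y).
  { intros z Hz. destruct (Rle_dec z 1).
    - pose proof (sin_lt_x z Hz). assert (0 <= sin z).
      { apply sin_ge_0; pose proof PI2_1 as HPI; lra. }
      rewrite Rabs_pos_eq; lra.
    - pose proof (SIN_bound z). apply Rabs_le_iff. lra. }
  destruct (Rtotal_order y 0) as [H|[H|H]].
  - rewrite <- (Ropp_involutive y). rewrite sin_neg, !Rabs_Ropp. rewrite (Rabs_left y) by lra.
    apply Hpos; lra.
  - subst; rewrite sin_0; lra.
  - rewrite (Rabs_pos_eq y) by lra. auto.
Qed.

Lemma chord p a b : on_circle p -> deucl (rot p a) (rot p b) <= Rabs (a - b).
Proof.
  intros Hp. pose proof (deucl_circle _ _ (rot_circle p a Hp) (rot_circle p b Hp)) as E.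
  rewrite dot_rot in E by auto.
  replace (a - b) with (2 * ((a - b) / 2)) in E by field. rewrite cos_2a_sin in E.
  pose proof (Rsqr_le_abs_1 _ _ (Rabs_sin_le ((a - b) / 2))) as H. unfold Rsqr in H.
  assert (E2 : Rsqr (deucl (rot p a) (rot p b)) <= Rsqr (a - b)).
  { unfold Rsqr. rewrite E. 
    replace ((a - b) * (a - b)) with (4 * ((a - b) / 2 * ((a - b) / 2))) by field. lra. }
  apply Rsqr_le_abs_0 in E2. rewrite (Rabs_pos_eq (deucl _ _)) in E2 by apply deucl_nonneg. exact E2.
Qed.

Definition clamp (s : R) := Rmax 0 (Rmin 1 s).

Lemma clamp_range s : 0 <= clamp s <= 1.
Proof. unfold clamp, Rmax, Rmin; repeat destruct Rle_dec; lra. Qed.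
Lemma clamp_id s : 0 <= s <= 1 -> clamp s = s.
Proof. unfold clamp, Rmax, Rmin; repeat destruct Rle_dec; lra. Qed.
Lemma clamp_lip s s' : Rabs (clamp s - clamp s') <= Rabs (s - s').
Proof. unfold clamp, Rmax, Rmin; repeat destruct Rle_dec; unfold Rabs; repeat destruct Rcase_abs; lra. Qed.
Lemma clamp_out s : ~ unit_int s -> clamp s = 0 \/ clamp s = 1.
Proof. unfold unit_int, clamp, Rmax, Rmin; repeat destruct Rle_dec; lra. Qed.
Lemma clamp_idem s : clamp (clamp s) = clamp s.
Proof. apply clamp_id, clamp_range. Qed.

Lemma Rmin_lip a s s' : Rabs (Rmin s a - Rmin s' a) <= Rabs (s - s').
Proof. unfold Rmin; repeat destruct Rle_dec; unfold Rabs; repeat destruct Rcase_abs; lra. Qed.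

Lemma cp_lip f x C : 0 <= C -> (forall y, Rabs (f y - f x) <= C * Rabs (y - x)) -> continuity_pt f x.
Proof.
  intros HC H. intros eps Heps. exists (eps / (C + 1)). split.
  apply Rdiv_lt_0_compat; lra.
  intros y [_ Hy]. simpl in *. unfold R_dist in *. eapply Rle_lt_trans. apply H.
  apply Rle_lt_trans with (C * (eps / (C+1))). apply Rmult_le_compat_l; lra.
  apply Rmult_lt_reg_r with (C + 1). lra. field_simplify; lra.
Qed.

Lemma cp_const c x : continuity_pt (fun _ => c) x.
Proof. apply continuity_pt_const. intros a b; reflexivity. Qed.
Lemma cp_id x : continuity_pt (fun y => y) x.
Proof. apply continuity_pt_id. Qed.
Lemma cp_plus f g x : continuity_pt f x -> continuity_pt g x -> continuity_pt (fun y => f y + g y) x.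
Proof. intros; apply (continuity_pt_plus f g); auto. Qed.
Lemma cp_minus f g x : continuity_pt f x -> continuity_pt g x -> continuity_pt (fun y => f y - g y) x.
Proof. intros; apply (continuity_pt_minus f g); auto. Qed.
Lemma cp_mult f g x : continuity_pt f x -> continuity_pt g x -> continuity_pt (fun y => f y * g y) x.
Proof. intros; apply (continuity_pt_mult f g); auto. Qed.
Lemma cp_div f g x : continuity_pt f x -> continuity_pt g x -> g x <> 0 -> continuity_pt (fun y => f y / g y) x.
Proof. intros; apply (continuity_pt_div f g); auto. Qed.
Lemma cp_comp f g x : continuity_pt f x -> continuity_pt g (f x) -> continuity_pt (fun y => g (f y)) x.
Proof. intros; apply (continuity_pt_comp f g); auto. Qed.
Lemma cp_cos f x : continuity_pt f x -> continuity_pt (fun y => cos (f y)) x.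
Proof. intros; apply cp_comp; auto. apply continuity_cos. Qed.
Lemma cp_sin f x : continuity_pt f x -> continuity_pt (fun y => sin (f y)) x.
Proof. intros; apply cp_comp; auto. apply continuity_sin. Qed.
Lemma cp_atan f x : continuity_pt f x -> continuity_pt (fun y => atan (f y)) x.
Proof. intros; apply cp_comp; auto. apply derivable_continuous_pt, derivable_pt_atan. Qed.
Lemma cp_clamp f x : continuity_pt f x -> continuity_pt (fun y => clamp (f y)) x.
Proof. intros; apply cp_comp; auto. apply cp_lip with 1. lra. intros; rewrite Rmult_1_l; apply clamp_lip. Qed.
Lemma cp_Rmin f a x : continuity_pt f x -> continuity_pt (fun y => Rmin (f y) a) x.
Proof. intros; apply (cp_comp f (fun z => Rmin z a)); auto. apply cp_lip with 1. lra. intros; rewrite Rmult_1_l; apply Rmin_lip. Qed.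
Lemma cp_ext f g x : (forall y, f y = g y) -> continuity_pt f x -> continuity_pt g x.
Proof. intros E H. replace g with f; auto. apply functional_extensionality; auto. Qed.

Lemma cp_intro f x : (forall eps, 0 < eps -> exists d, 0 < d /\ forall y, Rabs (y - x) < d -> Rabs (f y - f x) < eps) ->
  continuity_pt f x.
Proof.
  intros H eps Heps. destruct (H eps Heps) as [d [Hd Hy]]. exists d; split; auto.
  intros y [_ Hy']. simpl in *. unfold R_dist in *. auto.
Qed.
Lemma cp_elim f x : continuity_pt f x -> forall eps, 0 < eps -> exists d, 0 < d /\ forall y, Rabs (y - x) < d -> Rabs (f y - f x) < eps.
Proof.
  intros H eps Heps. destruct (H eps Heps) as [d [Hd Hy]]. exists d; split; auto.
  intros y Hy'. destruct (Req_dec y x). subst. unfold Rminus; rewrite Rplus_opp_r, Rabs_R0; auto.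
  apply (Hy y). split. unfold D_x, no_cond; auto. simpl; unfold R_dist; auto.
Qed.

Lemma int_const f :
  (forall t, 0 <= t <= 1 -> forall eps, 0 < eps -> exists d, 0 < d /\
      forall t', 0 <= t' <= 1 -> Rabs (t' - t) < d -> Rabs (f t' - f t) < eps) ->
  (forall t, 0 <= t <= 1 -> exists k, f t = IZR k) -> f 0 = f 1.
Proof.
  intros Hc Hi.
  set (g := fun t => f (clamp t)).
  assert (Cg : continuity g).
  { intros t. apply cp_intro. intros eps Heps.
    destruct (Hc (clamp t) (clamp_range t) eps Heps) as [d [Hd Hd']].
    exists d; split; auto. intros y Hy. unfold g. apply Hd'. apply clamp_range.
    eapply Rle_lt_trans. apply clamp_lip. auto. }
  destruct (Hi 0) as [k0 E0]. lra. destruct (Hi 1) as [k1 E1]. lra.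
  destruct (Z.eq_dec k0 k1) as [->|Hne]. congruence. exfalso.
  assert (Hg0 : g 0 = IZR k0). { unfold g; rewrite clamp_id; auto; lra. }
  assert (Hg1 : g 1 = IZR k1). { unfold g; rewrite clamp_id; auto; lra. }
  set (km := Z.min k0 k1).
  assert (Hy : Rmin (g 0) (g 1) <= IZR km + /2 <= Rmax (g 0) (g 1)).
  { rewrite Hg0, Hg1. unfold km, Rmin, Rmax.
    destruct (Z.min_spec k0 k1) as [[Hl E]|[Hl E]]; rewrite E;
    repeat destruct Rle_dec; try (apply IZR_le in r || idtac); split;
    try (apply IZR_lt in Hl); try lra.
    all: try (assert (k0 <> k1) by auto; assert (IZR (k0 + 1) <= IZR k1) by (apply IZR_le; lia); rewrite plus_IZR in *; lra).
    all: try (assert (IZR (k1 + 1) <= IZR k0) by (apply IZR_le; lia); rewrite plus_IZR in *; lra).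
    all: try (assert (IZR (k0 + 1) <= IZR k1) by (apply IZR_le; lia); rewrite plus_IZR in *; lra).
    all: try (apply Rnot_le_lt in n; apply lt_IZR in n; lia). }
  destruct (IVT_gen g 0 1 _ Cg Hy) as [t [Ht Et]].
  unfold g in Et. destruct (Hi (clamp t) (clamp_range t)) as [k Ek]. rewrite Ek in Et.
  assert (E : IZR (k - km) = /2) by (rewrite minus_IZR; lra).
  destruct (Z_le_gt_dec (k - km) 0) as [H|H].
  - apply IZR_le in H. lra.
  - assert (H' : (1 <= k - km)%Z) by lia. apply IZR_le in H'. lra.
Qed.

Lemma cT_range (y z : nat -> R * R) k : 0 <= Rmin 1 (deucl (y k) (z k)) <= 1.
Proof. pose proof (deucl_nonneg (y k) (z k)). unfold Rmin; destruct Rle_dec; lra. Qed.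

Lemma dT_S2 y z : dT y z = S2 (fun k => Rmin 1 (deucl (y k) (z k))).
Proof. reflexivity. Qed.

Lemma dT_ge y z k : (/2)^k * Rmin 1 (deucl (y k) (z k)) <= dT y z.
Proof. rewrite dT_S2. apply (S2_ge _ 1 k (cT_range y z)). Qed.

Lemma dT_nonneg y z : 0 <= dT y z.
Proof. rewrite dT_S2. apply (S2_nonneg _ 1 (cT_range y z)). Qed.

Lemma dT_le2 y z : dT y z <= 2.
Proof.
  rewrite dT_S2. pose proof (S2_bound _ 0 0 (cT_range y z)). rewrite pow_O in H.
  assert (H' : S2 (fun k => Rmin 1 (deucl (y k) (z k))) <= 2 * 0 + 2 * 1) by (apply H; [lra| intros; lia]). lra.
Qed.

Lemma dT_coord y z k e : e <= 1 -> dT y z < (/2)^k * e -> deucl (y k) (z k) < e.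
Proof.
  intros He H. pose proof (dT_ge y z k). pose proof (half_pow_pos k).
  assert (Rmin 1 (deucl (y k) (z k)) < e).
  { apply Rmult_lt_reg_l with ((/2)^k); auto. lra. }
  unfold Rmin in H2; destruct Rle_dec; lra.
Qed.

Lemma dT_bound y z K d : 0 <= d -> (forall k, (k < K)%nat -> deucl (y k) (z k) <= d) ->
  dT y z <= 2 * d + 2 * (/2)^K.
Proof.
  intros Hd H. rewrite dT_S2. apply S2_bound; auto. apply cT_range.
  intros k Hk. specialize (H k Hk). unfold Rmin; destruct Rle_dec; lra.
Qed.

Lemma dT_sym y z : dT y z = dT z y.
Proof. unfold dT. apply Series_ext. intros; rewrite deucl_sym; auto. Qed.

Lemma dT_self y : dT y y = 0.
Proof.
  apply Rle_antisym; [| apply dT_nonneg].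
  rewrite dT_S2. assert (forall K, S2 (fun k => Rmin 1 (deucl (y k) (y k))) <= 2 * (/2)^K).
  { intros K. pose proof (S2_bound (fun k => Rmin 1 (deucl (y k) (y k))) K 0 (cT_range y y)). 
    assert (S2 (fun k => Rmin 1 (deucl (y k) (y k))) <= 2 * 0 + 2 * (/2)^K); [|lra].
    apply H. lra. intros k _. rewrite deucl_self. unfold Rmin; destruct Rle_dec; lra. }
  apply Rnot_lt_le. intros Hlt. destruct (half_pow_small _ Hlt) as [K HK]. specialize (H K). lra.
Qed.

Lemma dT_tri y z w : dT y w <= dT y z + dT z w.
Proof.
  rewrite !dT_S2. rewrite <- (S2_add _ _ 1) by apply cT_range.
  apply (S2_mono _ _ 2).
  - intros k. pose proof (cT_range y w k). split. lra.
    pose proof (deucl_tri (y k) (z k) (w k)). pose proof (deucl_nonneg (y k) (z k)). pose proof (deucl_nonneg (z k) (w k)).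
    unfold Rmin in *; repeat destruct Rle_dec; lra.
  - intros k. pose proof (cT_range y z k). pose proof (cT_range z w k). lra.
Qed.

Lemma dT_eq0 y z : dT y z = 0 -> y = z.
Proof.
  intros H. apply functional_extensionality. intros k. apply deucl_eq0.
  pose proof (dT_ge y z k). pose proof (half_pow_pos k). pose proof (deucl_nonneg (y k) (z k)).
  assert (Rmin 1 (deucl (y k) (z k)) <= 0). { apply Rmult_le_reg_l with ((/2)^k); auto. lra. }
  unfold Rmin in H3; destruct Rle_dec; lra.
Qed.

Definition Wind (x : R * R) (g : R -> R * R) (n : Z) : Prop :=
  exists th : R -> R, (forall s, continuity_pt th s) /\ (forall s, rot x (th s) = g s) /\
    th 0 = 0 /\ th 1 = 2 * PI * IZR n.

Lemma cp_rel f : (forall s, continuity_pt f s) ->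
  forall t, 0 <= t <= 1 -> forall eps, 0 < eps -> exists d, 0 < d /\
      forall t', 0 <= t' <= 1 -> Rabs (t' - t) < d -> Rabs (f t' - f t) < eps.
Proof.
  intros H t _ eps Heps. destruct (cp_elim f t (H t) eps Heps) as [d [Hd H']]. exists d; split; auto.
Qed.

Lemma PI_pos' : 0 < PI. Proof. apply PI_RGT_0. Qed.

Lemma Wind_unique x g n m : on_circle x -> Wind x g n -> Wind x g m -> n = m.
Proof.
  intros Hx [th [C [R [Z O]]]] [th' [C' [R' [Z' O']]]].
  set (f := fun s => (th' s - th s) / (2 * PI)).
  assert (Hf : f 0 = f 1).
  { apply int_const.
    - apply cp_rel. intros s. unfold f. apply cp_div. apply cp_minus; auto. apply cp_const.
      pose proof PI_pos'; lra.
    - intros t _. assert (E : rot x (th t) = rot x (th' t)) by (rewrite R, R'; auto).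
      destruct (rot_eq_2PI x _ _ Hx E) as [k Hk]. exists (- k)%Z. unfold f. rewrite opp_IZR.
      pose proof PI_pos'. field_simplify_eq; lra. }
  unfold f in Hf. rewrite Z, Z', O, O' in Hf. pose proof PI_pos'.
  replace ((0 - 0) / (2 * PI)) with 0 in Hf by (field; lra).
  replace ((2 * PI * IZR m - 2 * PI * IZR n) / (2 * PI)) with (IZR m - IZR n) in Hf by (field; lra).
  apply eq_IZR; lra.
Qed.

Lemma cp_rel1 f t : continuity_pt f t -> forall eps, 0 < eps -> exists d, 0 < d /\
      forall t', 0 <= t' <= 1 -> Rabs (t' - t) < d -> Rabs (f t' - f t) < eps.
Proof.
  intros H eps Heps. destruct (cp_elim f t H eps Heps) as [d [Hd H']]. exists d; split; auto.
Qed.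

Lemma Wind_close x g g' n m : on_circle x -> Wind x g n -> Wind x g' m ->
  (forall s, 0 <= s <= 1 -> deucl (g s) (g' s) < 1) -> n = m.
Proof.
  intros Hx [th [C [R [Z O]]]] [th' [C' [R' [Z' O']]]] Hcl.
  assert (Hang : forall s, ang (g s) (g' s) = atan (sin (th' s - th s) / cos (th s - th' s))).
  { intros s. rewrite <- R, <- R'. unfold ang. rewrite dot_rot, cross_rot by auto. reflexivity. }
  assert (Hdot : forall s, 0 <= s <= 1 -> 1/2 < cos (th s - th' s)).
  { intros s Hs. rewrite <- (dot_rot x) by auto. rewrite R, R'. apply dot_close; auto.
    rewrite <- R; apply rot_circle; auto. rewrite <- R'; apply rot_circle; auto. }
  set (f := fun s => (th' s - th s - ang (g s) (g' s)) / (2 * PI)).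
  pose proof PI_pos'.
  assert (Hf : f 0 = f 1).
  { apply int_const.
    - intros t Ht. apply cp_rel1. unfold f. apply cp_div; [| apply cp_const | lra].
      apply (cp_ext (fun s => th' s - th s - atan (sin (th' s - th s) / cos (th s - th' s)))).
      { intros s; rewrite Hang; auto. }
      apply cp_minus. apply cp_minus; auto.
      apply cp_atan. apply cp_div. apply cp_sin, cp_minus; auto. apply cp_cos, cp_minus; auto.
      specialize (Hdot t Ht). lra.
    - intros t Ht. unfold f.
      assert (E : rot x (th t + ang (g t) (g' t)) = rot x (th' t)).
      { assert (c1 : on_circle (g t)) by (rewrite <- R; apply rot_circle; auto).
        assert (c2 : on_circle (g' t)) by (rewrite <- R'; apply rot_circle; auto).
        rewrite <- rot_add, R, R'. apply rot_ang; auto.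
        pose proof (dot_close _ _ c1 c2 (Hcl t Ht)). lra. }
      destruct (rot_eq_2PI x _ _ Hx E) as [k Hk]. exists (- k)%Z. rewrite opp_IZR.
      field_simplify_eq; lra. }
  assert (G0 : g 0 = x) by (rewrite <- R, Z; apply rot_0).
  assert (G0' : g' 0 = x) by (rewrite <- R', Z'; apply rot_0).
  assert (G1 : g 1 = x) by (rewrite <- R, O; apply rot_2PIZ).
  assert (G1' : g' 1 = x) by (rewrite <- R', O'; apply rot_2PIZ).
  unfold f in Hf. rewrite G0, G0', G1, G1', ang_self, Z, Z', O, O' in Hf.
  replace ((0 - 0 - 0) / (2 * PI)) with 0 in Hf by (field; lra).
  replace ((2 * PI * IZR m - 2 * PI * IZR n - 0) / (2 * PI)) with (IZR m - IZR n) in Hf by (field; lra).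
  apply eq_IZR; lra.
Qed.

Definition is_path (x : R * R) (g : R -> R * R) : Prop :=
  (forall s, on_circle (g s)) /\ (forall s, g s = g (clamp s)) /\
  (forall s, continuity_pt (fun s => fst (g s)) s /\ continuity_pt (fun s => snd (g s)) s) /\
  g 0 = x /\ g 1 = x.

Lemma path_mesh x g : is_path x g -> exists N : nat, (0 < N)%nat /\
  forall s s', Rabs (s - s') <= / INR N -> deucl (g s) (g s') < 1.
Proof.
  intros [Hc [Hcl [Hct _]]].
  destruct (Heine_cor2 (f := fun s => fst (g s)) (a := 0) (b := 1) (fun s _ => proj1 (Hct s)) (mkposreal (1/2) ltac:(lra))) as [d1 H1].
  destruct (Heine_cor2 (f := fun s => snd (g s)) (a := 0) (b := 1) (fun s _ => proj2 (Hct s)) (mkposreal (1/2) ltac:(lra))) as [d2 H2].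
  simpl in *.
  destruct (archimed_cor1 (Rmin d1 d2)) as [N [HN HN0]].
  { destruct d1, d2; simpl; unfold Rmin; destruct Rle_dec; lra. }
  exists N; split; auto. intros s s' Hs.
  rewrite (Hcl s), (Hcl s').
  assert (Hd : Rabs (clamp s - clamp s') < Rmin d1 d2).
  { eapply Rle_lt_trans. apply clamp_lip. lra. }
  assert (Hd1 : Rabs (clamp s - clamp s') < d1). { eapply Rlt_le_trans; [exact Hd | apply Rmin_l]. }
  assert (Hd2 : Rabs (clamp s - clamp s') < d2). { eapply Rlt_le_trans; [exact Hd | apply Rmin_r]. }
  specialize (H1 _ _ (clamp_range s) (clamp_range s') Hd1).
  specialize (H2 _ _ (clamp_range s) (clamp_range s') Hd2).
  eapply Rle_lt_trans. apply deucl_le_sum. lra.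
Qed.

Fixpoint lsum (g : R -> R * R) (N : nat) (j : nat) (s : R) : R :=
  match j with
  | O => 0
  | S j => lsum g N j s + ang (g (Rmin s (INR j / INR N))) (g (Rmin s (INR (S j) / INR N)))
  end.

Lemma lsum_S g N j s : lsum g N (S j) s = lsum g N j s + ang (g (Rmin s (INR j / INR N))) (g (Rmin s (INR (S j) / INR N))).
Proof. reflexivity. Qed.

Lemma Rmin_lip2 s a b : Rabs (Rmin s a - Rmin s b) <= Rabs (a - b).
Proof. rewrite (Rmin_comm s a), (Rmin_comm s b). apply Rmin_lip. Qed.

Lemma Wind_exists x g : on_circle x -> is_path x g -> exists n, Wind x g n.
Proof.
  intros Hx Hp. destruct (path_mesh x g Hp) as [N [HN Hm]].
  destruct Hp as [Hc [Hcl [Hct [H0 H1]]]].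
  assert (HNr : 0 < INR N) by (apply lt_0_INR; auto).
  assert (Hstep : forall j s, 0 < dot (g (Rmin s (INR j / INR N))) (g (Rmin s (INR (S j) / INR N)))).
  { intros j s. assert (1/2 < dot (g (Rmin s (INR j / INR N))) (g (Rmin s (INR (S j) / INR N)))); [|lra].
    apply dot_close; auto. apply Hm. eapply Rle_trans. apply Rmin_lip2.
    rewrite S_INR. replace (INR j / INR N - (INR j + 1) / INR N) with (- / INR N) by (field; lra).
    rewrite Rabs_Ropp, Rabs_pos_eq. lra. left; apply Rinv_0_lt_compat; auto. }
  assert (Hrot : forall j s, rot x (lsum g N j s) = g (Rmin s (INR j / INR N))).
  { induction j; intros s; simpl lsum.
    - rewrite rot_0. rewrite Hcl. simpl INR. replace (0 / INR N) with 0 by (field; lra).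
      rewrite <- H0. f_equal. unfold clamp, Rmin, Rmax; repeat destruct Rle_dec; lra.
    - rewrite <- rot_add, IHj. apply rot_ang; auto. }
  assert (Hcont : forall j s, continuity_pt (lsum g N j) s).
  { induction j; intros s.
    - apply cp_const.
    - apply (cp_ext (fun s => lsum g N j s + ang (g (Rmin s (INR j / INR N))) (g (Rmin s (INR (S j) / INR N))))).
      { intros; rewrite lsum_S; auto. }
      apply cp_plus; auto. unfold ang.
      assert (Cf : forall a, continuity_pt (fun s => fst (g (Rmin s a))) s).
      { intros a. apply (cp_comp (fun s => Rmin s a) (fun z => fst (g z))). apply cp_Rmin, cp_id. apply Hct. }
      assert (Cs : forall a, continuity_pt (fun s => snd (g (Rmin s a))) s).
      { intros a. apply (cp_comp (fun s => Rmin s a) (fun z => snd (g z))). apply cp_Rmin, cp_id. apply Hct. }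
      apply cp_atan. unfold cross, dot. apply cp_div.
      + apply cp_minus; apply cp_mult; auto.
      + apply cp_plus; apply cp_mult; auto.
      + specialize (Hstep j s). unfold dot in Hstep. cbv beta. lra. }
  set (th := lsum g N N).
  assert (Rth : forall s, rot x (th s) = g s).
  { intros s. unfold th. rewrite Hrot. replace (INR N / INR N) with 1 by (field; lra).
    rewrite Hcl, (Hcl s). f_equal. unfold clamp, Rmin, Rmax; repeat destruct Rle_dec; lra. }
  assert (Zth : th 0 = 0).
  { unfold th. generalize N at 2. intros M. induction M; auto. rewrite lsum_S, IHM.
    assert (E : forall a, 0 <= a -> Rmin 0 a = 0) by (intros a Ha; unfold Rmin; destruct Rle_dec; lra).
    rewrite !E. rewrite ang_self. ring.
    all: apply Rdiv_le_0_compat; auto; apply pos_INR. }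
  assert (E1 : rot x (th 1) = rot x 0) by (rewrite Rth, H1, rot_0; auto).
  destruct (rot_eq_2PI x _ _ Hx E1) as [k Hk]. exists k. exists th. repeat split; auto.
  unfold th; auto. lra.
Qed.

Lemma loop_clamp xb l : is_loop xb l -> forall s, l s = l (clamp s).
Proof.
  intros [_ [Hout [H0 [H1 _]]]] s. destruct (Rle_dec 0 s), (Rle_dec s 1).
  - rewrite clamp_id; auto.
  - rewrite Hout by (unfold unit_int; lra). destruct (clamp_out s) as [E|E]; unfold unit_int; try lra; rewrite E; auto.
  - rewrite Hout by (unfold unit_int; lra). destruct (clamp_out s) as [E|E]; unfold unit_int; try lra; rewrite E; auto.
  - lra.
Qed.

Lemma coord_cont (F : R -> nat -> R * R) k s0 :
  (forall eps, 0 < eps -> exists d, 0 < d /\ forall s, Rabs (s - s0) < d -> dT (F s0) (F s) < eps) ->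
  continuity_pt (fun s => fst (F s k)) s0 /\ continuity_pt (fun s => snd (F s k)) s0.
Proof.
  intros H. split; apply cp_intro; intros eps Heps;
  destruct (H ((/2)^k * Rmin eps 1)) as [d [Hd Hd']];
  try (apply Rmult_lt_0_compat; [apply half_pow_pos| unfold Rmin; destruct Rle_dec; lra]);
  exists d; split; auto; intros s Hs; specialize (Hd' s Hs);
  apply dT_coord in Hd'; try apply Rmin_r.
  - eapply Rle_lt_trans. rewrite Rabs_minus_sym. apply deucl_fst. eapply Rlt_le_trans; eauto. apply Rmin_l.
  - eapply Rle_lt_trans. rewrite Rabs_minus_sym. apply deucl_snd. eapply Rlt_le_trans; eauto. apply Rmin_l.
Qed.

Lemma loop_coord_path x l k : is_loop (const_seq x) l -> is_path x (fun s => l s k).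
Proof.
  intros Hl. pose proof (loop_clamp _ _ Hl) as Hcl.
  destruct Hl as [HT [Hout [H0 [H1 Hc]]]].
  split; [|split; [|split; [|split]]].
  - intros s; apply HT.
  - intros s; rewrite Hcl; auto.
  - intros s. apply (coord_cont (fun s => l s) k s).
    intros eps Heps. destruct (Hc (clamp s) eps (clamp_range s) Heps) as [d [Hd Hd']].
    exists d; split; auto. intros s' Hs'. rewrite (Hcl s), (Hcl s'). apply Hd'. apply clamp_range.
    rewrite Rabs_minus_sym. eapply Rle_lt_trans. apply clamp_lip. auto.
  - simpl. rewrite H0; reflexivity.
  - simpl. rewrite H1; reflexivity.
Qed.

Definition windc (x : R * R) (l : R -> nat -> R * R) (k : nat) : Z :=
  epsilon (inhabits 0%Z) (fun n => Wind x (fun s => l s k) n).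

Lemma windc_spec x l k : on_circle x -> is_loop (const_seq x) l -> Wind x (fun s => l s k) (windc x l k).
Proof.
  intros Hx Hl. unfold windc. apply epsilon_spec. apply Wind_exists; auto. apply loop_coord_path; auto.
Qed.

Lemma tube (F : R -> R -> R * R) :
  (forall s t, 0 <= s <= 1 -> 0 <= t <= 1 -> forall eps, 0 < eps -> exists d, 0 < d /\
     forall s' t', 0 <= s' <= 1 -> 0 <= t' <= 1 -> Rabs (s - s') < d -> Rabs (t - t') < d ->
       deucl (F s t) (F s' t') < eps) ->
  forall t0, 0 <= t0 <= 1 -> exists eta, 0 < eta /\ forall t, 0 <= t <= 1 -> Rabs (t - t0) < eta ->
    forall s, 0 <= s <= 1 -> deucl (F s t) (F s t0) < 1.
Proof.
  intros Hc t0 Ht0. apply NNPP. intros Hno.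
  assert (Hex : forall m : nat, exists p : R * R, (0 <= fst p <= 1) /\ (0 <= snd p <= 1) /\
     Rabs (snd p - t0) < / (INR m + 1) /\ 1 <= deucl (F (fst p) (snd p)) (F (fst p) t0)).
  { intros m. apply NNPP. intros Hm. apply Hno. exists (/ (INR m + 1)). split.
    apply Rinv_0_lt_compat. pose proof (pos_INR m); lra.
    intros t Ht Htt s Hs. apply Rnot_le_lt. intros Hle. apply Hm. exists (s, t). simpl. auto. }
  set (sq := fun m => proj1_sig (constructive_indefinite_description _ (Hex m))).
  assert (Hsq : forall m, (0 <= fst (sq m) <= 1) /\ (0 <= snd (sq m) <= 1) /\
     Rabs (snd (sq m) - t0) < / (INR m + 1) /\ 1 <= deucl (F (fst (sq m)) (snd (sq m))) (F (fst (sq m)) t0)).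
  { intros m. unfold sq. destruct (constructive_indefinite_description _ (Hex m)); simpl; auto. }
  destruct (Bolzano_Weierstrass (fun m => fst (sq m)) (fun c => 0 <= c <= 1) (compact_P3 0 1)) as [l Hl].
  { intros n; apply Hsq. }
  destruct (Hc (clamp l) t0 (clamp_range l) Ht0 (1/2)) as [d [Hd Hd']]. lra.
  destruct (archimed_cor1 d Hd) as [N [HN HN0]].
  destruct (Hl (disc l (mkposreal d Hd)) N) as [p [Hp Vp]].
  { exists (mkposreal d Hd). intros y Hy; auto. }
  unfold disc in Vp; simpl in Vp.
  destruct (Hsq p) as [Hs [Ht [Htt Hbad]]].
  assert (Hcs : Rabs (clamp l - fst (sq p)) < d).
  { rewrite <- (clamp_id (fst (sq p))) by auto. eapply Rle_lt_trans. apply clamp_lip.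
    rewrite Rabs_minus_sym; auto. }
  assert (Htp : Rabs (t0 - snd (sq p)) < d).
  { rewrite Rabs_minus_sym. eapply Rlt_trans. apply Htt.
    apply Rle_lt_trans with (/ INR N); auto. apply Rinv_le_contravar. apply lt_0_INR; lia.
    apply le_INR in Hp. lra. }
  pose proof (Hd' _ _ Hs Ht Hcs Htp) as A1.
  assert (A2 : deucl (F (clamp l) t0) (F (fst (sq p)) t0) < 1/2).
  { apply Hd'; auto. unfold Rminus; rewrite Rplus_opp_r, Rabs_R0; auto. }
  pose proof (deucl_tri (F (fst (sq p)) (snd (sq p))) (F (clamp l) t0) (F (fst (sq p)) t0)).
  rewrite deucl_sym in A1. lra.
Qed.

Lemma Wind_ext x g g' n : (forall s, g s = g' s) -> Wind x g n -> Wind x g' n.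
Proof. intros E H. replace g' with g; auto. apply functional_extensionality; auto. Qed.

Lemma Wind_lin x c : Wind x (fun s => rot x (2 * PI * IZR c * clamp s)) c.
Proof.
  exists (fun s => 2 * PI * IZR c * clamp s). repeat split.
  - intros s. apply cp_mult. apply cp_const. apply cp_clamp, cp_id.
  - rewrite clamp_id by lra. ring.
  - rewrite clamp_id by lra. ring.
Qed.

Lemma homotopy_wind x l n : on_circle x -> is_loop (const_seq x) l ->
  loop_homotopic (const_seq x) l (wind_loop x n) -> forall k, windc x l k = n k.
Proof.
  intros Hx Hl [H [HT [H0 [H1 [Hb Hc]]]]] k.
  set (h := fun t s => H (clamp s) (clamp t) k).
  assert (HF : forall s t, 0 <= s <= 1 -> 0 <= t <= 1 -> forall eps, 0 < eps -> exists d, 0 < d /\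
     forall s' t', 0 <= s' <= 1 -> 0 <= t' <= 1 -> Rabs (s - s') < d -> Rabs (t - t') < d ->
       deucl (H s t k) (H s' t' k) < eps).
  { intros s t Hs Ht eps Heps.
    destruct (Hc s t ((/2)^k * Rmin eps 1) Hs Ht) as [d [Hd Hd']].
    { apply Rmult_lt_0_compat; [apply half_pow_pos| unfold Rmin; destruct Rle_dec; lra]. }
    exists d; split; auto. intros s' t' Hs' Ht' E1 E2. specialize (Hd' s' t' Hs' Ht' E1 E2).
    apply dT_coord in Hd'. eapply Rlt_le_trans; eauto. apply Rmin_l. apply Rmin_r. }
  assert (Hpath : forall t, is_path x (h t)).
  { intros t. split; [|split; [|split; [|split]]].
    - intros s. apply HT; apply clamp_range.
    - intros s. unfold h. rewrite clamp_idem; auto.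
    - intros s. unfold h. split; apply cp_intro; intros eps Heps;
      destruct (HF (clamp s) (clamp t) (clamp_range s) (clamp_range t) eps Heps) as [d [Hd Hd']];
      exists d; split; auto; intros s' Hs';
      (assert (D : deucl (H (clamp s) (clamp t) k) (H (clamp s') (clamp t) k) < eps);
       [apply Hd'; try apply clamp_range;
        [ rewrite Rabs_minus_sym; eapply Rle_lt_trans; [apply clamp_lip | auto]
        | unfold Rminus; rewrite Rplus_opp_r, Rabs_R0; auto ] |]).
      + eapply Rle_lt_trans; [| apply D]. rewrite Rabs_minus_sym. apply deucl_fst.
      + eapply Rle_lt_trans; [| apply D]. rewrite Rabs_minus_sym. apply deucl_snd.
    - unfold h. rewrite clamp_id by lra. destruct (Hb (clamp t) (clamp_range t)) as [E _]. rewrite E; reflexivity.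
    - unfold h. rewrite (clamp_id 1) by lra. destruct (Hb (clamp t) (clamp_range t)) as [_ E]. rewrite E; reflexivity. }
  set (wt := fun t => epsilon (inhabits 0%Z) (fun m => Wind x (h t) m)).
  assert (Hwt : forall t, Wind x (h t) (wt t)).
  { intros t. unfold wt. apply epsilon_spec. apply Wind_exists; auto. }
  assert (E01 : IZR (wt 0) = IZR (wt 1)).
  { apply (int_const (fun t => IZR (wt t))).
    - intros t0 Ht0 eps Heps.
      destruct (tube (fun s t => H s t k) HF t0 Ht0) as [eta [Heta Htube]].
      exists eta; split; auto. intros t' Ht' Htt.
      assert (E : wt t' = wt t0).
      { apply (Wind_close x (h t') (h t0)); auto. intros s Hs. unfold h.
        rewrite (clamp_id t') by auto. rewrite (clamp_id t0) by auto. rewrite (clamp_id s) by auto.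
        apply Htube; auto. }
      rewrite E. unfold Rminus; rewrite Rplus_opp_r, Rabs_R0; auto.
    - intros t _. exists (wt t); auto. }
  apply eq_IZR in E01.
  assert (A0 : windc x l k = wt 0).
  { apply (Wind_unique x (fun s => l s k)); auto. apply windc_spec; auto.
    apply (Wind_ext x (h 0)); auto. intros s. unfold h. rewrite (clamp_id 0) by lra.
    rewrite H0 by apply clamp_range. rewrite <- (loop_clamp _ _ Hl). auto. }
  assert (A1 : wt 1 = n k).
  { apply (Wind_unique x (h 1)); auto.
    apply (Wind_ext x (fun s => rot x (2 * PI * IZR (n k) * clamp s))). 2: apply Wind_lin.
    intros s. unfold h. rewrite (clamp_id 1) by lra. rewrite H1 by apply clamp_range. reflexivity. }
  congruence.
Qed.

Lemma fin_min (Rel : nat -> R -> Prop) :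
  (forall k, exists d, 0 < d /\ Rel k d) ->
  (forall k d d', 0 < d' -> d' <= d -> Rel k d -> Rel k d') ->
  forall K, exists d, 0 < d /\ forall k, (k < K)%nat -> Rel k d.
Proof.
  intros Hex Hmon K. induction K.
  - exists 1; split; [lra| intros; lia].
  - destruct IHK as [d [Hd HK]]. destruct (Hex K) as [d' [Hd' HK']].
    exists (Rmin d d'); split. unfold Rmin; destruct Rle_dec; lra.
    intros k Hk. destruct (Nat.eq_dec k K) as [->|Hne].
    + apply (Hmon _ d'); auto. unfold Rmin; destruct Rle_dec; lra. apply Rmin_r.
    + apply (Hmon _ d); auto. unfold Rmin; destruct Rle_dec; lra. apply Rmin_l. apply HK; lia.
Qed.

Lemma dT_from_coords {P : Type} (A : nat -> R * R) (B : P -> nat -> R * R) (Q : P -> R -> Prop) :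
  (forall nu d d', 0 < d' -> d' <= d -> Q nu d' -> Q nu d) ->
  (forall k e, 0 < e -> exists d, 0 < d /\ forall nu, Q nu d -> deucl (A k) (B nu k) < e) ->
  forall eps, 0 < eps -> exists d, 0 < d /\ forall nu, Q nu d -> dT A (B nu) < eps.
Proof.
  intros Hmon Hk eps Heps. destruct (half_pow_small (eps/2)) as [K HK]. lra.
  destruct (fin_min (fun k d => forall nu, Q nu d -> deucl (A k) (B nu k) < eps / 8)) with (K := K) as [d [Hd Hd']].
  - intros k; apply Hk; lra.
  - intros k d d' Hd' Hle H nu Hq. apply H. apply (Hmon nu d d'); auto.
  - exists d; split; auto. intros nu Hq.
    pose proof (dT_bound A (B nu) K (eps / 8)) as Hb.
    assert (dT A (B nu) <= 2 * (eps/8) + 2 * (/2)^K). { apply Hb. lra. intros k Hk'. left; apply Hd'; auto. }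
    lra.
Qed.

Lemma lin_cont2 (th : R -> R) c s t : continuity_pt th s -> 0 <= s <= 1 ->
  forall e, 0 < e -> exists d, 0 < d /\ forall s' t', 0 <= s' <= 1 -> 0 <= t' <= 1 -> 0 <= t <= 1 ->
    Rabs (s - s') < d -> Rabs (t - t') < d ->
    Rabs (((1 - t) * th s + t * (c * s)) - ((1 - t') * th s' + t' * (c * s'))) < e.
Proof.
  intros Hth Hs e He.
  destruct (cp_elim th s Hth (e/3)) as [d1 [Hd1 H1]]. lra.
  set (M := Rabs (th s) + 2 * Rabs c + 1).
  assert (HM : 0 < M) by (unfold M; pose proof (Rabs_pos (th s)); pose proof (Rabs_pos c); lra).
  exists (Rmin d1 (e / (3 * M))). split.
  { unfold Rmin; destruct Rle_dec; try lra. apply Rdiv_lt_0_compat; lra. }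
  intros s' t' Hs' Ht' Ht Es Et.
  assert (Es1 : Rabs (s' - s) < d1). { rewrite Rabs_minus_sym. eapply Rlt_le_trans; [exact Es| apply Rmin_l]. }
  assert (Es2 : Rabs (s - s') < e / (3 * M)). { eapply Rlt_le_trans; [exact Es| apply Rmin_r]. }
  assert (Et2 : Rabs (t - t') < e / (3 * M)). { eapply Rlt_le_trans; [exact Et| apply Rmin_r]. }
  specialize (H1 s' Es1).
  replace (((1 - t) * th s + t * (c * s)) - ((1 - t') * th s' + t' * (c * s')))
    with ((1 - t') * (th s - th s') + (t' - t) * th s + c * (t * (s - s') + (t - t') * s')) by ring.
  assert (B1 : Rabs ((1 - t') * (th s - th s')) <= e / 3).
  { rewrite Rabs_mult, Rabs_pos_eq by lra. rewrite Rabs_minus_sym in H1.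
    pose proof (Rabs_pos (th s - th s')). nra. }
  assert (B2 : Rabs ((t' - t) * th s) <= Rabs (t - t') * Rabs (th s)).
  { rewrite Rabs_mult, (Rabs_minus_sym t'); lra. }
  assert (B3 : Rabs (c * (t * (s - s') + (t - t') * s')) <= Rabs c * (Rabs (s - s') + Rabs (t - t'))).
  { rewrite Rabs_mult. apply Rmult_le_compat_l. apply Rabs_pos.
    eapply Rle_trans. apply Rabs_triang. rewrite !Rabs_mult. rewrite (Rabs_pos_eq t), (Rabs_pos_eq s') by lra.
    pose proof (Rabs_pos (s - s')); pose proof (Rabs_pos (t - t')). nra. }
  pose proof (Rabs_triang ((1 - t') * (th s - th s') + (t' - t) * th s) (c * (t * (s - s') + (t - t') * s'))).
  pose proof (Rabs_triang ((1 - t') * (th s - th s')) ((t' - t) * th s)).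
  assert (B4 : Rabs (t - t') * Rabs (th s) + Rabs c * (Rabs (s - s') + Rabs (t - t')) <= M * (e / (3 * M))).
  { unfold M. pose proof (Rabs_pos (th s)); pose proof (Rabs_pos c);
    pose proof (Rabs_pos (s - s')); pose proof (Rabs_pos (t - t')).
    assert (Rabs (t - t') * Rabs (th s) <= e / (3 * M) * Rabs (th s)) by nra.
    assert (Rabs c * Rabs (s - s') <= Rabs c * (e / (3 * M))) by nra.
    assert (Rabs c * Rabs (t - t') <= Rabs c * (e / (3 * M))) by nra.
    fold M. unfold M at 1. nra. }
  replace (M * (e / (3 * M))) with (e / 3) in B4 by (field; lra).
  lra.
Qed.

Definition thk (x : R * R) (l : R -> nat -> R * R) (k : nat) : R -> R :=
  epsilon (inhabits (fun _ : R => 0)) (fun th => (forall s, continuity_pt th s) /\ (forall s, rot x (th s) = l s k) /\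
    th 0 = 0 /\ th 1 = 2 * PI * IZR (windc x l k)).

Lemma thk_spec x l k : on_circle x -> is_loop (const_seq x) l ->
  (forall s, continuity_pt (thk x l k) s) /\ (forall s, rot x (thk x l k s) = l s k) /\
    thk x l k 0 = 0 /\ thk x l k 1 = 2 * PI * IZR (windc x l k).
Proof. intros Hx Hl. unfold thk. apply epsilon_spec. apply windc_spec; auto. Qed.

Lemma homotopic_to_wind x l : on_circle x -> is_loop (const_seq x) l ->
  loop_homotopic (const_seq x) l (wind_loop x (windc x l)).
Proof.
  intros Hx Hl.
  exists (fun s t k => rot x ((1 - t) * thk x l k s + t * (2 * PI * IZR (windc x l k) * s))).
  split; [|split; [|split; [|split]]].
  - intros s t _ _ k. apply rot_circle; auto.
  - intros s _. apply functional_extensionality; intros k. destruct (thk_spec x l k Hx Hl) as [_ [R _]].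
    rewrite <- R. f_equal. ring.
  - intros s _. apply functional_extensionality; intros k. unfold wind_loop. f_equal. ring.
  - intros t _. split; apply functional_extensionality; intros k; destruct (thk_spec x l k Hx Hl) as [_ [_ [Z O]]]; unfold const_seq.
    + rewrite Z. replace ((1 - t) * 0 + t * (2 * PI * IZR (windc x l k) * 0)) with 0 by ring. apply rot_0.
    + rewrite O. replace ((1 - t) * (2 * PI * IZR (windc x l k)) + t * (2 * PI * IZR (windc x l k) * 1))
        with (2 * PI * IZR (windc x l k)) by ring. apply rot_2PIZ.
  - intros s t eps Hs Ht Heps.
    destruct (dT_from_coords
      (fun k => rot x ((1 - t) * thk x l k s + t * (2 * PI * IZR (windc x l k) * s)))
      (fun nu k => rot x ((1 - snd nu) * thk x l k (fst nu) + snd nu * (2 * PI * IZR (windc x l k) * fst nu)))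
      (fun nu d => unit_int (fst nu) /\ unit_int (snd nu) /\ Rabs (s - fst nu) < d /\ Rabs (t - snd nu) < d))
      with (eps := eps) as [d [Hd Hd']]; auto.
    + intros nu d d' _ Hle [A [B [C D]]]. split; [|split; [|split]]; auto; lra.
    + intros k e He. destruct (thk_spec x l k Hx Hl) as [C _].
      destruct (lin_cont2 (thk x l k) (2 * PI * IZR (windc x l k)) s t (C s) Hs e He) as [d [Hd Hd']].
      exists d; split; auto. intros [s' t'] [A [B [E1 E2]]]. simpl in *.
      eapply Rle_lt_trans. apply chord; auto. apply Hd'; auto.
    + exists d; split; auto. intros s' t' Hs' Ht' E1 E2. apply (Hd' (s', t')). simpl; auto.
Qed.

Lemma loops_in_iff x G (l : loop_space (const_seq x)) : on_circle x ->
  loops_in x G l <-> G (windc x (proj1_sig l)).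
Proof.
  intros Hx. destruct l as [l Hl]. unfold loops_in; simpl. split.
  - intros [n [Gn Hh]]. replace (windc x l) with n; auto.
    apply functional_extensionality; intros k. symmetry. apply (homotopy_wind x l n); auto.
  - intros G1. exists (windc x l). split; auto. apply homotopic_to_wind; auto.
Qed.

Lemma dL_spec xb (l0 l1 : loop_space xb) :
  (forall s, unit_int s -> dT (proj1_sig l0 s) (proj1_sig l1 s) <= dL l0 l1) /\
  (forall M, (forall s, unit_int s -> dT (proj1_sig l0 s) (proj1_sig l1 s) <= M) -> dL l0 l1 <= M).
Proof.
  unfold dL. set (E := fun r => exists s, unit_int s /\ r = dT (proj1_sig l0 s) (proj1_sig l1 s)).
  destruct (Lub_Rbar_correct E) as [Hub Hlub].
  assert (Hb : Rbar_le (Lub_Rbar E) 2).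
  { apply Hlub. intros r [s [_ ->]]. simpl. apply dT_le2. }
  assert (He : Rbar_le (dT (proj1_sig l0 0) (proj1_sig l1 0)) (Lub_Rbar E)).
  { apply Hub. exists 0. split; [unfold unit_int; lra| auto]. }
  destruct (Lub_Rbar E) as [r| |] eqn:EL; simpl in *; try contradiction.
  split.
  - intros s Hs. assert (Rbar_le (dT (proj1_sig l0 s) (proj1_sig l1 s)) r).
    { apply Hub. exists s; auto. } simpl in H; auto.
  - intros M HM. apply (Hlub M). intros z [s [Hs ->]]. simpl. auto.
Qed.

Lemma dL_ge xb (l0 l1 : loop_space xb) s : unit_int s -> dT (proj1_sig l0 s) (proj1_sig l1 s) <= dL l0 l1.
Proof. apply dL_spec. Qed.
Lemma dL_le xb (l0 l1 : loop_space xb) M : (forall s, unit_int s -> dT (proj1_sig l0 s) (proj1_sig l1 s) <= M) -> dL l0 l1 <= M.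
Proof. apply dL_spec. Qed.

Lemma dL_nonneg xb (l0 l1 : loop_space xb) : 0 <= dL l0 l1.
Proof. eapply Rle_trans. apply dT_nonneg. apply (dL_ge _ _ _ 0). unfold unit_int; lra. Qed.

Lemma dL_ge_all xb (l0 l1 : loop_space xb) s : dT (proj1_sig l0 s) (proj1_sig l1 s) <= dL l0 l1.
Proof.
  destruct (classic (unit_int s)). apply dL_ge; auto.
  pose proof (dL_nonneg _ l0 l1).
  destruct l0 as [f0 P0], l1 as [f1 P1]; simpl in *. pose proof P0 as [_ [Q0 _]]; pose proof P1 as [_ [Q1 _]].
  rewrite Q0, Q1 by auto. rewrite dT_self. auto.
Qed.

Lemma dL_metric xb : is_metric (@dL xb).
Proof.
  split; [|split; [|split]].
  - apply dL_nonneg.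
  - intros l0 l1. split.
    + intros H. destruct l0 as [f0 P0], l1 as [f1 P1]. apply subset_eq_compat.
      apply functional_extensionality; intros s. destruct (classic (unit_int s)).
      * apply dT_eq0. apply Rle_antisym. rewrite <- H. apply (dL_ge _ (exist _ f0 P0) (exist _ f1 P1)); auto. apply dT_nonneg.
      * pose proof P0 as [_ [E0 _]]; pose proof P1 as [_ [E1 _]]. rewrite E0, E1; auto.
    + intros ->. apply Rle_antisym; [| apply dL_nonneg]. apply dL_le. intros; rewrite dT_self; lra.
  - intros l0 l1. apply Rle_antisym; apply dL_le; intros s Hs; rewrite dT_sym; apply dL_ge; auto.
  - intros l0 l1 l2. apply dL_le. intros s Hs. eapply Rle_trans. apply (dT_tri _ (proj1_sig l1 s)).
    pose proof (dL_ge _ l0 l1 s Hs); pose proof (dL_ge _ l1 l2 s Hs); lra.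
Qed.

Lemma real_cauchy_lim (v : nat -> R) :
  (forall eps, 0 < eps -> exists N, forall n m, (N <= n)%nat -> (N <= m)%nat -> Rabs (v n - v m) < eps) ->
  forall eps, 0 < eps -> exists N, forall n, (N <= n)%nat -> Rabs (v n - real (Lim_seq v)) < eps.
Proof.
  intros H. assert (Ex : ex_finite_lim_seq v).
  { apply ex_lim_seq_cauchy_corr. intros [e He]. simpl. apply H; auto. }
  destruct Ex as [l Hl]. rewrite (is_lim_seq_unique _ _ Hl). simpl.
  apply is_lim_seq_Reals in Hl. intros eps Heps. destruct (Hl eps Heps) as [N HN].
  exists N. intros n Hn. apply HN. lia.
Qed.

Lemma lim_const_seq (v : nat -> R) c : (forall n, v n = c) -> real (Lim_seq v) = c.
Proof. intros H. rewrite (Lim_seq_ext _ (fun _ => c)) by auto. rewrite Lim_seq_const. auto. Qed.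

Lemma loop_space_complete x : on_circle x -> metric_complete (@dL (const_seq x)).
Proof.
  intros Hx u Hcau.
  set (U := fun n => proj1_sig (u n)).
  assert (HU : forall n, is_loop (const_seq x) (U n)) by (intros n; exact (proj2_sig (u n))).
  assert (HdT : forall n m s, dT (U n s) (U m s) <= dL (u n) (u m)) by (intros; apply dL_ge_all).
  assert (Hcd : forall s k e, 0 < e -> exists N, forall n m, (N <= n)%nat -> (N <= m)%nat -> deucl (U n s k) (U m s k) < e).
  { intros s k e He. destruct (Hcau ((/2)^k * Rmin e 1)) as [N HN].
    { apply Rmult_lt_0_compat. apply half_pow_pos. unfold Rmin; destruct Rle_dec; lra. }
    exists N. intros n m Hn Hm. specialize (HN n m Hn Hm). specialize (HdT n m s).
    assert (deucl (U n s k) (U m s k) < Rmin e 1). { apply dT_coord. apply Rmin_r. lra. }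
    pose proof (Rmin_l e 1). lra. }
  set (f := fun s k => (real (Lim_seq (fun n => fst (U n s k))), real (Lim_seq (fun n => snd (U n s k))))).
  assert (Lf : forall s k e, 0 < e -> exists N, forall n, (N <= n)%nat -> deucl (U n s k) (f s k) < e).
  { intros s k e He.
    destruct (real_cauchy_lim (fun n => fst (U n s k))) with (eps := e/2) as [N1 H1]; [| lra |].
    { intros e' He'. destruct (Hcd s k e' He') as [N HN]. exists N. intros n m Hn Hm.
      eapply Rle_lt_trans. apply deucl_fst. auto. }
    destruct (real_cauchy_lim (fun n => snd (U n s k))) with (eps := e/2) as [N2 H2]; [| lra |].
    { intros e' He'. destruct (Hcd s k e' He') as [N HN]. exists N. intros n m Hn Hm.
      eapply Rle_lt_trans. apply deucl_snd. auto. }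
    exists (max N1 N2). intros n Hn. eapply Rle_lt_trans. apply deucl_le_sum.
    unfold f; simpl. specialize (H1 n ltac:(lia)). specialize (H2 n ltac:(lia)). lra. }
  assert (Hconst : forall s, (forall n, U n s = const_seq x) -> f s = const_seq x).
  { intros s H. apply functional_extensionality; intros k. unfold f, const_seq.
    rewrite (lim_const_seq _ (fst x)), (lim_const_seq _ (snd x)). destruct x; auto.
    intros n; rewrite H; auto. intros n; rewrite H; auto. }
  assert (Unif : forall eps, 0 < eps -> exists N, forall n s, (N <= n)%nat -> dT (U n s) (f s) <= eps).
  { intros eps Heps. destruct (half_pow_small (eps / 2)) as [K HK]. lra.
    set (e := Rmin 1 (eps / 12)).
    assert (He : 0 < e) by (unfold e, Rmin; destruct Rle_dec; lra).
    assert (He1 : e <= 1) by apply Rmin_l.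
    assert (He2 : e <= eps / 12) by apply Rmin_r.
    destruct (Hcau ((/2)^K * e)) as [N HN]. { apply Rmult_lt_0_compat; auto. apply half_pow_pos. }
    exists N. intros n s Hn.
    eapply Rle_trans. apply (dT_bound _ _ K (3 * e)). lra.
    - intros k Hk. destruct (Lf s k e He) as [M HM].
      set (m := max M N).
      pose proof (HM m ltac:(unfold m; lia)).
      assert (deucl (U n s k) (U m s k) < e).
      { apply dT_coord; auto. eapply Rle_lt_trans. apply HdT. eapply Rlt_le_trans. apply HN; unfold m; lia.
        apply Rmult_le_compat_r. lra. apply half_pow_le. lia. }
      pose proof (deucl_tri (U n s k) (U m s k) (f s k)). lra.
    - lra. }
  assert (Hloop : is_loop (const_seq x) f).
  { split; [|split; [|split; [|split]]].
    - intros s k. unfold on_circle.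
      assert (Ex : forall (g : nat -> R), (forall eps, 0 < eps -> exists N, forall n m, (N <= n)%nat -> (N <= m)%nat -> Rabs (g n - g m) < eps) ->
               is_lim_seq g (real (Lim_seq g))).
      { intros g Hg. apply is_lim_seq_Reals. intros e He. destruct (real_cauchy_lim g Hg e He) as [N HN].
        exists N. intros n Hn. apply HN. lia. }
      assert (C1 : is_lim_seq (fun n => fst (U n s k)) (fst (f s k))).
      { apply Ex. intros e' He'. destruct (Hcd s k e' He') as [N HN]. exists N. intros n m Hn Hm.
        eapply Rle_lt_trans. apply deucl_fst. auto. }
      assert (C2 : is_lim_seq (fun n => snd (U n s k)) (snd (f s k))).
      { apply Ex. intros e' He'. destruct (Hcd s k e' He') as [N HN]. exists N. intros n m Hn Hm.
        eapply Rle_lt_trans. apply deucl_snd. auto. }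
      pose proof (is_lim_seq_plus' _ _ _ _ (is_lim_seq_mult' _ _ _ _ C1 C1) (is_lim_seq_mult' _ _ _ _ C2 C2)) as C3.
      apply (is_lim_seq_ext _ (fun _ => 1)) in C3.
      + apply is_lim_seq_unique in C3. rewrite Lim_seq_const in C3. injection C3; intros; simpl. lra.
      + intros n. destruct (HU n) as [HT _]. specialize (HT s k). unfold on_circle in HT. simpl in HT. lra.
    - intros s Hs. apply Hconst. intros n. destruct (HU n) as [_ [Ho _]]. auto.
    - apply Hconst. intros n. destruct (HU n) as [_ [_ [H0 _]]]. auto.
    - apply Hconst. intros n. destruct (HU n) as [_ [_ [_ [H1 _]]]]. auto.
    - intros s eps Hs Heps. destruct (Unif (eps / 4)) as [N HN]. lra.
      destruct (HU N) as [_ [_ [_ [_ Hc]]]]. destruct (Hc s (eps/4) Hs) as [d [Hd Hd']]. lra.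
      exists d; split; auto. intros s' Hs' Hss.
      pose proof (HN N s (le_n N)). pose proof (HN N s' (le_n N)). specialize (Hd' s' Hs' Hss).
      pose proof (dT_tri (f s) (U N s) (f s')). pose proof (dT_tri (U N s) (U N s') (f s')).
      rewrite dT_sym in H. lra. }
  exists (exist _ f Hloop). intros eps Heps. destruct (Unif (eps / 2)) as [N HN]. lra.
  exists N. intros n Hn. apply Rle_lt_trans with (eps / 2); [| lra].
  apply dL_le. intros s _. simpl. apply HN; auto.
Qed.

Definition cZ (a b : nat -> Z) (k : nat) : R := if Z.eq_dec (a k) (b k) then 0 else 1.

Lemma cZ_range a b k : 0 <= cZ a b k <= 1.
Proof. unfold cZ; destruct Z.eq_dec; lra. Qed.

Lemma dZ_S2 a b : dZ a b = S2 (cZ a b).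
Proof. reflexivity. Qed.

Lemma dZ_nonneg a b : 0 <= dZ a b.
Proof. rewrite dZ_S2. apply (S2_nonneg _ 1 (cZ_range a b)). Qed.

Lemma dZ_bound a b K : (forall k, (k < K)%nat -> a k = b k) -> dZ a b <= 2 * (/2)^K.
Proof.
  intros H. rewrite dZ_S2. pose proof (S2_bound (cZ a b) K 0 (cZ_range a b)).
  assert (S2 (cZ a b) <= 2 * 0 + 2 * (/2)^K); [| lra]. apply H0. lra.
  intros k Hk. unfold cZ. destruct Z.eq_dec; [lra| exfalso; auto].
Qed.

Lemma dZ_agree a b K : dZ a b < (/2)^K -> forall k, (k <= K)%nat -> a k = b k.
Proof.
  intros H k Hk. rewrite dZ_S2 in H. pose proof (S2_ge (cZ a b) 1 k (cZ_range a b)).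
  pose proof (half_pow_le k K Hk). pose proof (half_pow_pos k).
  assert (C : cZ a b k < 1).
  { apply Rmult_lt_reg_l with ((/2)^k); auto. lra. }
  unfold cZ in C. destruct Z.eq_dec; auto. lra.
Qed.

Lemma dZ_metric : is_metric dZ.
Proof.
  split; [|split; [|split]].
  - apply dZ_nonneg.
  - intros a b; split.
    + intros H. apply functional_extensionality; intros k. apply (dZ_agree a b k). rewrite H; apply half_pow_pos. lia.
    + intros ->. apply Rle_antisym; [| apply dZ_nonneg]. apply Rnot_lt_le; intros Hlt.
      destruct (half_pow_small _ Hlt) as [K HK]. pose proof (dZ_bound b b K (fun _ _ => eq_refl)). lra.
  - intros a b. unfold dZ. apply Series_ext. intros n. do 2 destruct Z.eq_dec; try lra; congruence.
  - intros a b c. rewrite !dZ_S2. rewrite <- (S2_add _ _ 1) by apply cZ_range.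
    apply (S2_mono _ _ 2).
    + intros k. pose proof (cZ_range a c k). split. lra. unfold cZ. repeat destruct Z.eq_dec; try lra. congruence.
    + intros k. pose proof (cZ_range a b k); pose proof (cZ_range b c k). lra.
Qed.

Fixpoint maxN (Nf : nat -> nat) (K : nat) : nat :=
  match K with O => O | S K => max (Nf K) (maxN Nf K) end.

Lemma maxN_ge Nf K k : (k < K)%nat -> (Nf k <= maxN Nf K)%nat.
Proof. induction K; simpl; intros H. lia. destruct (Nat.eq_dec k K). subst; lia. specialize (IHK ltac:(lia)); lia. Qed.

Lemma dZ_complete : metric_complete dZ.
Proof.
  intros u Hcau.
  assert (Hk : forall k, exists N, forall m n, (N <= m)%nat -> (N <= n)%nat -> u m k = u n k).
  { intros k. destruct (Hcau ((/2)^k) (half_pow_pos k)) as [N HN]. exists N. intros m n Hm Hn.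
    apply (dZ_agree _ _ k (HN m n Hm Hn)). lia. }
  set (Nf := fun k => proj1_sig (constructive_indefinite_description _ (Hk k))).
  assert (HNf : forall k m n, (Nf k <= m)%nat -> (Nf k <= n)%nat -> u m k = u n k).
  { intros k. unfold Nf. destruct (constructive_indefinite_description _ (Hk k)); simpl; auto. }
  exists (fun k => u (Nf k) k). intros eps Heps. destruct (half_pow_small eps Heps) as [K HK].
  exists (maxN Nf K). intros n Hn. eapply Rle_lt_trans; [| apply HK]. apply dZ_bound.
  intros k Hk'. apply HNf; auto. pose proof (maxN_ge Nf K k Hk'). lia.
Qed.

Definition decZ (m : nat) : Z := (Z.of_nat (fst (Cantor.of_nat m)) - Z.of_nat (snd (Cantor.of_nat m)))%Z.
Definition encZ (z : Z) : nat := Cantor.to_nat (Z.to_nat z, Z.to_nat (- z)).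
Lemma decZ_encZ z : decZ (encZ z) = z.
Proof. unfold decZ, encZ. rewrite Cantor.cancel_of_to. simpl. lia. Qed.

Fixpoint seqdec (c : nat) (k : nat) : nat :=
  match k with O => fst (Cantor.of_nat c) | S k => seqdec (snd (Cantor.of_nat c)) k end.
Fixpoint encf (a : nat -> nat) (K : nat) : nat :=
  match K with O => O | S K => Cantor.to_nat (a O, encf (fun j => a (S j)) K) end.
Lemma seqdec_encf K : forall a k, (k < K)%nat -> seqdec (encf a K) k = a k.
Proof.
  induction K; intros a k Hk. lia. destruct k; cbn [seqdec encf]; rewrite Cantor.cancel_of_to; cbn [fst snd]; auto.
  apply (IHK (fun j => a (S j))). lia.
Qed.

Lemma dZ_separable : metric_separable dZ.
Proof.
  right. exists (fun c k => decZ (seqdec c k)). intros a eps Heps.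
  destruct (half_pow_small eps Heps) as [K HK]. exists (encf (fun j => encZ (a j)) K).
  eapply Rle_lt_trans; [| apply HK]. apply dZ_bound. intros k Hk. rewrite seqdec_encf; auto.
  rewrite decZ_encZ; auto.
Qed.

Lemma dZ_polish : polish dZ.
Proof. split; [apply dZ_metric | split; [apply dZ_complete | apply dZ_separable]]. Qed.

Definition wmap (x : R * R) (l : loop_space (const_seq x)) : nat -> Z := windc x (proj1_sig l).

Lemma wmap_cont x : on_circle x -> metric_continuous (@dL (const_seq x)) dZ (wmap x).
Proof.
  intros Hx l eps Heps. destruct (half_pow_small eps Heps) as [K HK].
  exists ((/2)^K * (1/2)). split. pose proof (half_pow_pos K); lra.
  intros l' Hll. eapply Rle_lt_trans; [| apply HK]. apply dZ_bound. intros k Hk.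
  unfold wmap. destruct l as [f Pf], l' as [f' Pf']; simpl in *.
  apply (Wind_close x (fun s => f s k) (fun s => f' s k)); auto; try apply windc_spec; auto.
  intros s Hs. assert (deucl (f s k) (f' s k) < 1/2); [| lra].
  apply dT_coord. lra. eapply Rle_lt_trans. apply (dL_ge _ (exist _ f Pf) (exist _ f' Pf') s Hs).
  eapply Rlt_le_trans; eauto. apply Rmult_le_compat_r. lra. apply half_pow_le; lia.
Qed.

Definition gfun (x : R * R) (n : nat -> Z) : R -> nat -> R * R :=
  fun s k => rot x (2 * PI * IZR (n k) * clamp s).

Lemma gfun_loop x n : on_circle x -> is_loop (const_seq x) (gfun x n).
Proof.
  intros Hx. unfold gfun. split; [|split; [|split; [|split]]].
  - intros s k. apply rot_circle; auto.
  - intros s Hs. apply functional_extensionality; intros k. unfold const_seq.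
    destruct (clamp_out s Hs) as [E|E]; rewrite E.
    + rewrite Rmult_0_r; apply rot_0.
    + rewrite Rmult_1_r; apply rot_2PIZ.
  - apply functional_extensionality; intros k. unfold const_seq. rewrite clamp_id by lra. rewrite Rmult_0_r; apply rot_0.
  - apply functional_extensionality; intros k. unfold const_seq. rewrite clamp_id by lra. rewrite Rmult_1_r; apply rot_2PIZ.
  - intros s eps Hs Heps.
    destruct (dT_from_coords (fun k => rot x (2 * PI * IZR (n k) * clamp s))
       (fun s' k => rot x (2 * PI * IZR (n k) * clamp s'))
       (fun s' d => unit_int s' /\ Rabs (s - s') < d)) with (eps := eps) as [d [Hd Hd']]; auto.
    + intros nu d d' _ Hle [A B]. split; auto; lra.
    + intros k e He.
      assert (Cc : continuity_pt (fun s => 2 * PI * IZR (n k) * clamp s) s).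
      { apply cp_mult. apply cp_const. apply cp_clamp, cp_id. }
      destruct (cp_elim _ s Cc e He) as [d [Hd Hd']].
      exists d; split; auto. intros s' [_ Hs']. eapply Rle_lt_trans. apply chord; auto.
      rewrite Rabs_minus_sym. apply Hd'; rewrite Rabs_minus_sym; auto.
    + exists d; split; auto.
Qed.

Definition gmap (x : R * R) (Hx : on_circle x) (n : nat -> Z) : loop_space (const_seq x) :=
  exist _ (gfun x n) (gfun_loop x n Hx).

Lemma wmap_gmap x Hx n : wmap x (gmap x Hx n) = n.
Proof.
  apply functional_extensionality; intros k. unfold wmap, gmap; simpl.
  apply (Wind_unique x (fun s => gfun x n s k)); auto. apply windc_spec; auto. apply gfun_loop; auto.
  apply Wind_lin.
Qed.

Lemma gmap_cont x Hx : metric_continuous dZ (@dL (const_seq x)) (gmap x Hx).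
Proof.
  intros n eps Heps. destruct (half_pow_small (eps/2)) as [K HK]. lra.
  exists ((/2)^K). split. apply half_pow_pos. intros m Hnm.
  pose proof (dZ_agree _ _ _ Hnm) as Ag.
  apply Rle_lt_trans with (2 * 0 + 2 * (/2)^K); [| lra].
  apply dL_le. intros s _. simpl. apply dT_bound. lra.
  intros k Hk. unfold gfun. rewrite (Ag k) by lia. rewrite deucl_self; lra.
Qed.

Fixpoint plsum (v : nat -> R) (Mr : R) (j : nat) (s : R) : R :=
  match j with
  | O => 0
  | S j => plsum v Mr j s + (v (S j) - v j) * clamp (Mr * s - INR j)
  end.

Lemma plsum_S v Mr j s : plsum v Mr (S j) s = plsum v Mr j s + (v (S j) - v j) * clamp (Mr * s - INR j).
Proof. reflexivity. Qed.

Lemma plsum_cont v Mr j s : continuity_pt (fun s => plsum v Mr j s) s.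
Proof.
  induction j.
  - apply (cp_ext (fun _ => 0)). intros; reflexivity. apply cp_const.
  - apply (cp_ext (fun s => plsum v Mr j s + (v (S j) - v j) * clamp (Mr * s - INR j))).
    { intros; rewrite plsum_S; auto. }
    apply cp_plus; auto. apply cp_mult. apply cp_const. apply cp_clamp. apply cp_minus. apply cp_mult.
    apply cp_const. apply cp_id. apply cp_const.
Qed.

Lemma clamp_ge1 u : 1 <= u -> clamp u = 1.
Proof. unfold clamp, Rmax, Rmin; repeat destruct Rle_dec; lra. Qed.
Lemma clamp_le0 u : u <= 0 -> clamp u = 0.
Proof. unfold clamp, Rmax, Rmin; repeat destruct Rle_dec; lra. Qed.

Lemma plsum_A v Mr j s : INR j <= Mr * s -> forall m, (m <= j)%nat -> plsum v Mr m s = v m - v O.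
Proof.
  intros H m. induction m; intros Hm. simpl; ring.
  rewrite plsum_S, IHm by lia. rewrite clamp_ge1. ring.
  assert (INR (S m) <= INR j) by (apply le_INR; lia). rewrite S_INR in H0. lra.
Qed.

Lemma plsum_B v Mr j s : Mr * s <= INR j + 1 -> forall d, plsum v Mr (S j + d) s = plsum v Mr (S j) s.
Proof.
  intros H d. induction d. rewrite Nat.add_0_r; auto.
  replace (S j + S d)%nat with (S (S j + d)) by lia. rewrite plsum_S, IHd. rewrite clamp_le0. ring.
  rewrite plus_INR, S_INR. pose proof (pos_INR d). lra.
Qed.

Definition PL (v : nat -> R) (N : nat) (s : R) : R := plsum v (INR (S N)) (S N) s.

Lemma PL_interval v N j s : v O = 0 -> (j <= N)%nat -> INR j <= INR (S N) * s <= INR j + 1 ->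
  PL v N s = v j + (v (S j) - v j) * (INR (S N) * s - INR j).
Proof.
  intros H0 Hj [H1 H2]. unfold PL. replace (S N) with (S j + (N - j))%nat at 2 by lia.
  rewrite plsum_B by auto. rewrite plsum_S, (plsum_A v _ j s H1 j) by lia.
  rewrite clamp_id by lra. rewrite H0; ring.
Qed.

Lemma exists_interval_aux y m : 0 <= y <= INR (S m) -> exists j, (j <= m)%nat /\ INR j <= y <= INR j + 1.
Proof.
  induction m; intros Hy.
  - exists O. split; auto. simpl in *; lra.
  - destruct (Rle_dec y (INR (S m))).
    + destruct IHm as [j [Hj Hj']]. lra. exists j; split; auto.
    + exists (S m). split; auto. rewrite (S_INR (S m)) in Hy. lra.
Qed.

Lemma exists_interval N s : 0 <= s <= 1 -> exists j, (j <= N)%nat /\ INR j <= INR (S N) * s <= INR j + 1.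
Proof.
  intros Hs. apply exists_interval_aux. pose proof (pos_INR (S N)). split. nra.
  rewrite <- (Rmult_1_r (INR (S N))) at 2. apply Rmult_le_compat_l; lra.
Qed.

Lemma PL_0 v N : v O = 0 -> PL v N 0 = 0.
Proof.
  intros H. rewrite (PL_interval v N 0) by (simpl; auto with arith; lra). rewrite H. simpl. ring.
Qed.

Lemma PL_1 v N : v O = 0 -> PL v N 1 = v (S N).
Proof.
  intros H. rewrite (PL_interval v N N) by (auto; rewrite S_INR; lra). rewrite S_INR. ring.
Qed.

Definition Dc (c1 k i : nat) : Z := decZ (seqdec (seqdec c1 k) i).
Definition vnode (N c1 k i : nat) : R :=
  if Nat.eqb i O then 0 else if Nat.eqb i (S N) then IZR (Dc c1 k i) else IZR (Dc c1 k i) / INR (S N).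

Definition hc (x : R * R) (c : nat) : R -> nat -> R * R :=
  fun s k => if Nat.ltb k (fst (Cantor.of_nat c))
             then rot x (2 * PI * PL (vnode (fst (Cantor.of_nat c)) (snd (Cantor.of_nat c)) k) (fst (Cantor.of_nat c)) (clamp s))
             else x.

Lemma vnode_0 N c1 k : vnode N c1 k O = 0.
Proof. reflexivity. Qed.

Lemma hc_loop x c : on_circle x -> is_loop (const_seq x) (hc x c).
Proof.
  intros Hx. set (N := fst (Cantor.of_nat c)). set (c1 := snd (Cantor.of_nat c)).
  assert (E0 : forall k, hc x c 0 k = x).
  { intros k. unfold hc. fold N c1. destruct (Nat.ltb k N); auto. rewrite clamp_id by lra. rewrite PL_0 by apply vnode_0.
    rewrite Rmult_0_r; apply rot_0. }
  assert (E1 : forall k, hc x c 1 k = x).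
  { intros k. unfold hc. fold N c1. destruct (Nat.ltb k N); auto. rewrite clamp_id by lra. rewrite PL_1 by apply vnode_0.
    unfold vnode. rewrite Nat.eqb_refl. simpl Nat.eqb. apply rot_2PIZ. }
  split; [|split; [|split; [|split]]].
  - intros s k. unfold hc. destruct Nat.ltb; auto. apply rot_circle; auto.
  - intros s Hs. apply functional_extensionality; intros k. unfold const_seq.
    destruct (clamp_out s Hs) as [E|E].
    + transitivity (hc x c 0 k); [| apply E0]. unfold hc. rewrite E, (clamp_id 0) by lra. auto.
    + transitivity (hc x c 1 k); [| apply E1]. unfold hc. rewrite E, (clamp_id 1) by lra. auto.
  - apply functional_extensionality; intros k. apply E0.
  - apply functional_extensionality; intros k. apply E1.
  - intros s eps Hs Heps.
    destruct (dT_from_coords (hc x c s) (hc x c) (fun s' d => unit_int s' /\ Rabs (s - s') < d)) with (eps := eps)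
      as [d [Hd Hd']]; auto.
    + intros nu d d' _ Hle [A B]. split; auto; lra.
    + intros k e He. unfold hc. fold N c1. destruct (Nat.ltb k N).
      * assert (Cc : continuity_pt (fun s => 2 * PI * PL (vnode N c1 k) N (clamp s)) s).
        { apply cp_mult. apply cp_const. unfold PL. apply (cp_comp clamp (fun z => plsum (vnode N c1 k) (INR (S N)) (S N) z)).
          apply cp_clamp, cp_id. apply plsum_cont. }
        destruct (cp_elim _ s Cc e He) as [d [Hd Hd']].
        exists d; split; auto. intros s' [_ Hs']. eapply Rle_lt_trans. apply chord; auto.
        rewrite Rabs_minus_sym. apply Hd'; rewrite Rabs_minus_sym; auto.
      * exists 1; split. lra. intros; rewrite deucl_self; auto.
    + exists d; split; auto.
Qed.

Lemma loop_space_separable x : on_circle x -> metric_separable (@dL (const_seq x)).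
Proof.
  intros Hx. right. exists (fun c => exist _ (hc x c) (hc_loop x c Hx)).
  intros [l Hl] eps Heps.
  pose proof PI_pos' as HPI.
  set (phi := fun k s => thk x l k s / (2 * PI)).
  set (eta := eps / (16 * PI)).
  assert (Heta : 0 < eta) by (unfold eta; apply Rdiv_lt_0_compat; lra).
  destruct (half_pow_small (eps / 4)) as [K HK]. lra.
  destruct (fin_min (fun k d => forall s s', 0 <= s <= 1 -> 0 <= s' <= 1 -> Rabs (s - s') < d -> Rabs (phi k s - phi k s') < eta / 2))
    with (K := K) as [d [Hd Hd']].
  { intros k. destruct (thk_spec x l k Hx Hl) as [C _].
    destruct (Heine_cor2 (f := phi k) (a := 0) (b := 1)) with (eps := mkposreal (eta/2) ltac:(lra)) as [dd Hdd].
    { intros s _. unfold phi. apply (cp_div (thk x l k) (fun _ => 2 * PI)); auto. apply cp_const. lra. }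
    exists dd. split. apply cond_pos. intros s s' Hs Hs' Hss. apply Hdd; auto. }
  { intros k dd dd' _ Hle H s s' Hs Hs' Hss. apply H; auto. lra. }
  destruct (archimed_cor1 (Rmin d (eta / 2))) as [N0 [HN0 HN0pos]].
  { unfold Rmin; destruct Rle_dec; lra. }
  set (N := max N0 K).
  set (Mr := INR (S N)).
  assert (HMr : 0 < Mr) by (unfold Mr; apply lt_0_INR; lia).
  assert (HiM : / Mr < Rmin d (eta / 2)).
  { eapply Rle_lt_trans; [| apply HN0]. apply Rinv_le_contravar. apply lt_0_INR; lia. unfold Mr; apply le_INR; lia. }
  assert (HiMd : / Mr < d) by (eapply Rlt_le_trans; [apply HiM| apply Rmin_l]).
  assert (HiMe : / Mr < eta / 2) by (eapply Rlt_le_trans; [apply HiM| apply Rmin_r]).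
  set (zf := fun k i => if Nat.eqb i (S N) then windc x l k else up (phi k (INR i / Mr) * Mr)).
  set (c1 := encf (fun k => encf (fun i => encZ (zf k i)) (S (S N))) K).
  exists (Cantor.to_nat (N, c1)).
  apply Rle_lt_trans with (eps / 2); [| lra].
  apply dL_le. intros s Hs. cbn [proj1_sig].
  apply Rle_trans with (2 * (eps / 8) + 2 * (/2)^K); [| lra].
  apply dT_bound. lra. intros k Hk.
  destruct (thk_spec x l k Hx Hl) as [_ [HR [HZ HO]]].
  unfold hc. rewrite Cantor.cancel_of_to. cbn [fst snd].
  assert (Hk' : Nat.ltb k N = true) by (apply Nat.ltb_lt; unfold N; lia). rewrite Hk'.
  rewrite clamp_id by auto. rewrite <- HR.
  set (v := vnode N c1 k).
  assert (Hv : forall i, (i <= S N)%nat -> Rabs (v i - phi k (INR i / Mr)) <= / Mr).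
  { intros i Hi. unfold v, vnode.
    assert (HD : Dc c1 k i = zf k i).
    { unfold Dc, c1. rewrite seqdec_encf by auto. rewrite seqdec_encf by lia. apply decZ_encZ. }
    rewrite HD. pose proof (Rinv_0_lt_compat _ HMr).
    destruct (Nat.eqb i 0) eqn:E0.
    - apply Nat.eqb_eq in E0. subst i. simpl INR. unfold phi. replace (0 / Mr) with 0 by (field; lra).
      rewrite HZ. replace (0 - 0 / (2 * PI)) with 0 by (field; lra). rewrite Rabs_R0; lra.
    - destruct (Nat.eqb i (S N)) eqn:E1.
      + apply Nat.eqb_eq in E1. subst i. unfold zf. rewrite Nat.eqb_refl.
        fold Mr. replace (Mr / Mr) with 1 by (field; lra). unfold phi. rewrite HO.
        replace (IZR (windc x l k) - 2 * PI * IZR (windc x l k) / (2 * PI)) with 0 by (field; lra).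
        rewrite Rabs_R0; lra.
      + unfold zf. rewrite E1. set (r := phi k (INR i / Mr) * Mr). destruct (archimed r) as [A1 A2].
        fold Mr. replace (IZR (up r) / Mr - phi k (INR i / Mr)) with ((IZR (up r) - r) / Mr) by (unfold r; field; lra).
        rewrite Rabs_pos_eq. unfold Rdiv. rewrite <- (Rmult_1_l (/ Mr)) at 2. apply Rmult_le_compat_r; lra.
        apply Rdiv_le_0_compat; lra. }
  destruct (exists_interval N s Hs) as [j [Hj [Hj1 Hj2]]]. fold Mr in Hj1, Hj2.
  rewrite (PL_interval v N j s) by (auto; fold Mr; lra). fold Mr.
  assert (Hsj : forall i, (i <= S N)%nat -> Rabs (s - INR i / Mr) <= / Mr -> Rabs (phi k s - v i) < eta).
  { intros i Hi Hsi. specialize (Hv i Hi).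
    assert (Hi01 : 0 <= INR i / Mr <= 1).
    { split. apply Rdiv_le_0_compat; [apply pos_INR| lra]. apply Rmult_le_reg_r with Mr; auto.
      unfold Rdiv; rewrite Rmult_assoc, Rinv_l by lra. unfold Mr. rewrite Rmult_1_r, Rmult_1_l. apply le_INR; auto. }
    assert (Rabs (phi k s - phi k (INR i / Mr)) < eta / 2). { apply Hd'; auto. lra. }
    replace (phi k s - v i) with ((phi k s - phi k (INR i / Mr)) - (v i - phi k (INR i / Mr))) by ring.
    pose proof (Rabs_triang (phi k s - phi k (INR i / Mr)) (- (v i - phi k (INR i / Mr)))).
    rewrite Rabs_Ropp in H0. unfold Rminus at 1. lra. }
  assert (B1 : Rabs (phi k s - v j) < eta).
  { apply Hsj. lia. replace (s - INR j / Mr) with ((Mr * s - INR j) / Mr) by (field; lra).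
    rewrite Rabs_pos_eq. unfold Rdiv. rewrite <- (Rmult_1_l (/ Mr)) at 2. apply Rmult_le_compat_r. 
    left; apply Rinv_0_lt_compat; auto. lra. apply Rdiv_le_0_compat; lra. }
  assert (B2 : Rabs (phi k s - v (S j)) < eta).
  { apply Hsj. lia. replace (s - INR (S j) / Mr) with ((Mr * s - INR (S j)) / Mr) by (field; lra).
    rewrite S_INR. rewrite Rabs_left1. replace (- ((Mr * s - (INR j + 1)) / Mr)) with ((INR j + 1 - Mr * s) / Mr) by (field; lra).
    unfold Rdiv. rewrite <- (Rmult_1_l (/ Mr)) at 2. apply Rmult_le_compat_r. 
    left; apply Rinv_0_lt_compat; auto. lra. unfold Rdiv. apply Rmult_le_0_r. lra. left; apply Rinv_0_lt_compat; auto. }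
  set (lam := Mr * s - INR j).
  assert (Hlam : 0 <= lam <= 1) by (unfold lam; lra).
  assert (Hmain : Rabs (phi k s - (v j + (v (S j) - v j) * lam)) < eta).
  { replace (phi k s - (v j + (v (S j) - v j) * lam)) with ((1 - lam) * (phi k s - v j) + lam * (phi k s - v (S j))) by ring.
    eapply Rle_lt_trans. apply Rabs_triang. rewrite !Rabs_mult, (Rabs_pos_eq (1 - lam)), (Rabs_pos_eq lam) by lra.
    set (A := Rabs (phi k s - v j)) in *. set (B := Rabs (phi k s - v (S j))) in *.
    assert (T1 : (1 - lam) * A <= (1 - lam) * eta) by (apply Rmult_le_compat_l; lra).
    assert (T2 : lam * B <= lam * eta) by (apply Rmult_le_compat_l; lra).
    destruct (Req_dec lam 0) as [E|E].
    - rewrite E in *. lra.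
    - assert (T3 : lam * B < lam * eta) by (apply Rmult_lt_compat_l; lra). lra. }
  eapply Rle_trans. apply chord; auto.
  replace (thk x l k s - 2 * PI * (v j + (v (S j) - v j) * lam)) with (2 * PI * (phi k s - (v j + (v (S j) - v j) * lam)))
    by (unfold phi; field; lra).
  rewrite Rabs_mult, (Rabs_pos_eq (2 * PI)) by lra. unfold eta in Hmain.
  apply Rle_trans with (2 * PI * (eps / (16 * PI))). apply Rmult_le_compat_l; lra.
  right; field; lra.
Qed.

Theorem lemma5p1 (Gamma : pointclass) (HGamma : closed_cont_preimages Gamma)
  (x : R * R) (Hx : on_circle x) (G : (nat -> Z) -> Prop) (HG : is_subgroup G) :
  Gamma (nat -> Z) dZ G <->
  Gamma (loop_space (const_seq x)) (@dL (const_seq x)) (loops_in x G).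
Proof.
  assert (PL : polish (@dL (const_seq x))).
  { split; [apply dL_metric | split; [apply loop_space_complete; auto | apply loop_space_separable; auto]]. }
  split.
  - intros H. pose proof (HGamma _ _ _ _ PL dZ_polish (wmap x) (wmap_cont x Hx) G H) as H'.
    replace (loops_in x G) with (fun l => G (wmap x l)); auto.
    apply functional_extensionality; intros l. apply propositional_extensionality.
    rewrite loops_in_iff; auto. reflexivity.
  - intros H. pose proof (HGamma _ _ _ _ dZ_polish PL (gmap x Hx) (gmap_cont x Hx) _ H) as H'.
    replace G with (fun n => loops_in x G (gmap x Hx n)); auto.
    apply functional_extensionality; intros n. apply propositional_extensionality.
    rewrite loops_in_iff by auto. rewrite <- (wmap_gmap x Hx n) at 2. reflexivity.
Qed.
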